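(* Let $n\in\mathbb{Z}$ with $|n|\geq1$, $\alpha>0$, $R>0$, $\kappa\in\mathbb{R}$. An element $u\in H$ is a nontrivial critical point of $\mathcal{I}_\kappa$ if and only if $u\in\mathcal{M}$ and $u$ is a critical point of the restriction $\mathcal{I}_\kappa|_{\mathcal{M}}$.
   Context: $H$ is the completion of $\{u\in C^1[0,R]: u(0)=0=u(R)\}$ with respect to the inner product $(u,\tilde u)=\int_0^R\{ru_r\tilde u_r+\frac1r u\tilde u\}dr$. $\mathcal{I}_\kappa(u)=\frac12\int_0^R\{ru_r^2+\frac{n^2}{r}u^2-2(\alpha^{-1}-\kappa)ru^2+2\alpha^{-2}r\ln(1+\alpha u^2)\}dr$, a $C^1$ (indeed $C^3$) functional on $H$. Define $\gamma_\kappa(u)=\frac12\langle \mathcal{I}_\kappa'(u),u\rangle=\frac12\int_0^R\{ru_r^2+\frac{n^2}{r}u^2-2(\alpha^{-1}-\kappa)ru^2+2\alpha^{-1}\frac{ru^2}{1+\alpha u^2}\}dr$ and the Nehari manifold $\mathcal{M}=\{u\in H\setminus\{0\}:\gamma_\kappa(u)=0\}$. A critical point of $\mathcal{I}_\kappa|_{\mathcal{M}}$ is a point $u\in\mathcal{M}$ for which there is $\xi\in\mathbb{R}$ with $\mathcal{I}_\kappa'(u)=\xi\gamma_\kappa'(u)$ in $H^{-1}$. *)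

(* Defs.v *)
From Stdlib Require Import Reals ZArith.
From Coquelicot Require Import Coquelicot.
Open Scope R_scope.

(* Functions are u : R -> R; only their values on [0,Rad] matter. *)

Definition cont_on (a b : R) (f : R -> R) : Prop :=
  forall x, a <= x <= b -> forall eps, 0 < eps ->
    exists delta, 0 < delta /\
      forall y, a <= y <= b -> Rabs (y - x) < delta -> Rabs (f y - f x) < eps.

Definition C1_0 (Rad : R) (f : R -> R) : Prop :=
  cont_on 0 Rad f /\
  (exists g, cont_on 0 Rad g /\
     forall x, 0 < x < Rad -> ex_derive f x /\ Derive f x = g x) /\
  f 0 = 0 /\ f Rad = 0.

Definition Hnorm2 (Rad : R) (f : R -> R) : R :=
  RInt (fun r => r * (Derive f r)^2 + (f r)^2 / r) 0 Rad.

(* The completion H is represented by Cauchy sequences (for the H-norm) of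
   elements of {u in C^1[0,R] : u(0)=0=u(R)}; all notions below are invariant
   under equivalence of Cauchy sequences. *)
Definition Hseq := nat -> R -> R.

Definition inH (Rad : R) (U : Hseq) : Prop :=
  (forall k, C1_0 Rad (U k)) /\
  forall eps, 0 < eps -> exists N, forall k m, (N <= k)%nat -> (N <= m)%nat ->
    Hnorm2 Rad (fun r => U k r - U m r) < eps.

Definition Hadd (U V : Hseq) : Hseq := fun k r => U k r + V k r.
Definition Hscal (c : R) (U : Hseq) : Hseq := fun k r => c * U k r.

Definition Hnorm (Rad : R) (U : Hseq) : R :=
  sqrt (real (Lim_seq (fun k => Hnorm2 Rad (U k)))).

Definition Ifun (n : Z) (alpha kappa Rad : R) (f : R -> R) : R :=
  1/2 * RInt (fun r => r * (Derive f r)^2 + (IZR n)^2 / r * (f r)^2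
                       - 2 * (/ alpha - kappa) * r * (f r)^2
                       + 2 * / alpha ^ 2 * r * ln (1 + alpha * (f r)^2)) 0 Rad.

Definition gfun (n : Z) (alpha kappa Rad : R) (f : R -> R) : R :=
  1/2 * RInt (fun r => r * (Derive f r)^2 + (IZR n)^2 / r * (f r)^2
                       - 2 * (/ alpha - kappa) * r * (f r)^2
                       + 2 * / alpha * (r * (f r)^2 / (1 + alpha * (f r)^2))) 0 Rad.

Definition IE (n : Z) (alpha kappa Rad : R) (U : Hseq) : R :=
  real (Lim_seq (fun k => Ifun n alpha kappa Rad (U k))).
Definition GE (n : Z) (alpha kappa Rad : R) (U : Hseq) : R :=
  real (Lim_seq (fun k => gfun n alpha kappa Rad (U k))).

Definition is_Fderiv (Rad : R) (F : Hseq -> R) (U : Hseq) (L : Hseq -> R) : Prop :=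
  (forall H1 H2, inH Rad H1 -> inH Rad H2 -> L (Hadd H1 H2) = L H1 + L H2) /\
  (forall c H, inH Rad H -> L (Hscal c H) = c * L H) /\
  (exists C, forall H, inH Rad H -> Rabs (L H) <= C * Hnorm Rad H) /\
  (forall eps, 0 < eps -> exists delta, 0 < delta /\
     forall H, inH Rad H -> Hnorm Rad H < delta ->
       Rabs (F (Hadd U H) - F U - L H) <= eps * Hnorm Rad H).

Definition nontrivial_crit (n : Z) (alpha kappa Rad : R) (U : Hseq) : Prop :=
  Hnorm Rad U <> 0 /\
  exists L, is_Fderiv Rad (IE n alpha kappa Rad) U L /\
            forall H, inH Rad H -> L H = 0.

Definition inM (n : Z) (alpha kappa Rad : R) (U : Hseq) : Prop :=
  Hnorm Rad U <> 0 /\ GE n alpha kappa Rad U = 0.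

Definition crit_on_M (n : Z) (alpha kappa Rad : R) (U : Hseq) : Prop :=
  inM n alpha kappa Rad U /\
  exists xi L1 L2, is_Fderiv Rad (IE n alpha kappa Rad) U L1 /\
                   is_Fderiv Rad (GE n alpha kappa Rad) U L2 /\
                   forall H, inH Rad H -> L1 H = xi * L2 H.

(* Main.v *)
Require Import Defs.
From Stdlib Require Import Reals ZArith Lra Lia Psatz FunctionalExtensionality.
From Coquelicot Require Import Coquelicot.
Open Scope R_scope.
Ltac rring := match goal with |- ?a = ?b => change (@eq R a b) end; unfold Rdiv; ring.

Definition contR (G : R -> R) := forall x, continuous G x.

Lemma cont_eps (f : R -> R) x :
  (forall eps, 0 < eps -> exists d, 0 < d /\ forall y, Rabs (y - x) < d -> Rabs (f y - f x) < eps) ->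
  continuous f x.
Proof.
  intros H. apply continuity_pt_filterlim.
  intros eps Heps. destruct (H eps Heps) as [d [Hd Hy]].
  exists d; split; [lra|]. intros y [_ Hy2]. apply Hy. exact Hy2.
Qed.

Lemma eps_cont (f : R -> R) x : continuous f x ->
  forall eps, 0 < eps -> exists d, 0 < d /\ forall y, Rabs (y - x) < d -> Rabs (f y - f x) < eps.
Proof.
  intros H. apply continuity_pt_filterlim in H.
  intros eps Heps. destruct (H eps Heps) as [d [Hd Hy]].
  exists d; split; [lra|]. intros y Hy2.
  destruct (Req_dec y x) as [->|Hne].
  - rewrite Rminus_eq_0, Rabs_R0; lra.
  - apply Hy. split; [split; [exact I| auto]| exact Hy2].
Qed.

Lemma contR_plus f g : contR f -> contR g -> contR (fun x => f x + g x).
Proof. intros Hf Hg x. apply (continuous_plus f g); auto. Qed.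
Lemma contR_mult f g : contR f -> contR g -> contR (fun x => f x * g x).
Proof. intros Hf Hg x. apply (continuous_mult f g); auto. Qed.
Lemma contR_const c : contR (fun _ => c).
Proof. intros x. apply continuous_const. Qed.
Lemma contR_id : contR (fun x => x).
Proof. intros x. apply continuous_id. Qed.
Lemma contR_comp f g : contR f -> contR g -> contR (fun x => g (f x)).
Proof. intros Hf Hg x. apply continuous_comp; auto. Qed.

Definition CR (Rad : R) (F : R -> R) :=
  exists G, contR G /\ forall r, 0 < r < Rad -> F r = G r.

Lemma CR_plus Rad F1 F2 : CR Rad F1 -> CR Rad F2 -> CR Rad (fun r => F1 r + F2 r).
Proof.
  intros [G1 [H1 E1]] [G2 [H2 E2]]. exists (fun r => G1 r + G2 r); split.
  apply contR_plus; auto. intros r Hr; rewrite E1, E2; auto.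
Qed.
Lemma CR_mult Rad F1 F2 : CR Rad F1 -> CR Rad F2 -> CR Rad (fun r => F1 r * F2 r).
Proof.
  intros [G1 [H1 E1]] [G2 [H2 E2]]. exists (fun r => G1 r * G2 r); split.
  apply contR_mult; auto. intros r Hr; rewrite E1, E2; auto.
Qed.
Lemma CR_const Rad c : CR Rad (fun _ => c).
Proof. exists (fun _ => c); split; auto. apply contR_const. Qed.
Lemma CR_id Rad : CR Rad (fun r => r).
Proof. exists (fun r => r); split; auto. apply contR_id. Qed.
Lemma CR_comp Rad F phi : CR Rad F -> contR phi -> CR Rad (fun r => phi (F r)).
Proof.
  intros [G [H E]] Hp. exists (fun r => phi (G r)); split.
  apply contR_comp; auto. intros r Hr; rewrite E; auto.
Qed.
Lemma CR_ext Rad F1 F2 : CR Rad F1 -> (forall r, 0 < r < Rad -> F1 r = F2 r) -> CR Rad F2.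
Proof.
  intros [G [H E]] Ee. exists G; split; auto. intros r Hr; rewrite <- Ee; auto.
Qed.
Lemma CR_ex_RInt Rad F : 0 <= Rad -> CR Rad F -> ex_RInt F 0 Rad.
Proof.
  intros HR [G [H E]]. apply ex_RInt_ext with G.
  - intros x Hx. rewrite Rmin_left in Hx by lra. rewrite Rmax_right in Hx by lra.
    symmetry; apply E; lra.
  - apply (@ex_RInt_continuous R_CompleteNormedModule). intros; apply H.
Qed.

Definition clamp (Rad x : R) := Rmax 0 (Rmin Rad x).

Lemma clamp_in Rad x : 0 <= Rad -> 0 <= clamp Rad x <= Rad.
Proof. intros. unfold clamp, Rmax, Rmin. repeat destruct Rle_dec; lra. Qed.
Lemma clamp_id Rad x : 0 <= x <= Rad -> clamp Rad x = x.
Proof. intros. unfold clamp, Rmax, Rmin. repeat destruct Rle_dec; lra. Qed.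
Lemma clamp_lip Rad x y : 0 <= Rad -> Rabs (clamp Rad y - clamp Rad x) <= Rabs (y - x).
Proof. intros. unfold clamp, Rmax, Rmin. repeat destruct Rle_dec; unfold Rabs; repeat destruct Rcase_abs; lra. Qed.

Lemma cont_on_clamp Rad g : 0 <= Rad -> cont_on 0 Rad g -> contR (fun x => g (clamp Rad x)).
Proof.
  intros HR Hg x. apply cont_eps. intros eps Heps.
  destruct (Hg (clamp Rad x) (clamp_in Rad x HR) eps Heps) as [d [Hd Hy]].
  exists d; split; auto. intros y Hyx.
  apply Hy. apply clamp_in; auto. eapply Rle_lt_trans. apply clamp_lip; auto. auto.
Qed.

Lemma locally_int (P : R -> Prop) a b x : a < x < b -> (forall t, a < t < b -> P t) -> locally x P.
Proof.
  intros Hx HP. assert (He : 0 < Rmin (x - a) (b - x)) by (apply Rmin_pos; lra).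
  exists (mkposreal _ He). intros y Hy. apply HP.
  change (Rabs (y - x) < Rmin (x - a) (b - x)) in Hy.
  apply Rabs_def2 in Hy. destruct Hy as [Hy1 Hy2].
  pose proof (Rmin_l (x-a) (b-x)); pose proof (Rmin_r (x-a) (b-x)). lra.
Qed.

Lemma cont_pt (f : R -> R) x : continuous f x -> continuity_pt f x.
Proof. intros H; apply continuity_pt_filterlim; exact H. Qed.

Lemma contR_bound (g : R -> R) a b : a <= b -> contR g -> exists M, 0 <= M /\ forall c, a <= c <= b -> Rabs (g c) <= M.
Proof.
  intros Hab Hg.
  destruct (continuity_ab_maj g a b Hab) as [x1 [H1 _]]. intros; apply cont_pt, Hg.
  destruct (continuity_ab_maj (fun x => - g x) a b Hab) as [x2 [H2 _]].
  intros; apply cont_pt. apply (continuous_opp g). apply Hg.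
  exists (Rabs (g x1) + Rabs (g x2)). split. pose proof (Rabs_pos (g x1)); pose proof (Rabs_pos (g x2)); lra.
  intros c Hc. specialize (H1 c Hc); specialize (H2 c Hc).
  unfold Rabs; repeat destruct Rcase_abs; lra.
Qed.

Record rep (Rad : R) (f fh gh : R -> R) (M : R) : Prop := {
  rep_fh : contR fh;
  rep_gh : contR gh;
  rep_eq : forall r, 0 <= r <= Rad -> f r = fh r;
  rep_der : forall r, 0 < r < Rad -> ex_derive f r /\ Derive f r = gh r;
  rep_M : 0 <= M;
  rep_bnd : forall r, Rabs (fh r) <= M * Rabs r;
  rep_0 : forall r, r <= 0 -> fh r = 0;
  rep_R : forall r, Rad <= r -> fh r = 0
}.

Lemma C1_rep Rad f : 0 < Rad -> C1_0 Rad f -> exists fh gh M, rep Rad f fh gh M.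
Proof.
  intros HR [Hc [[g [Hg Hd]] [H0 HRf]]].
  set (fh := fun x => f (clamp Rad x)). set (gh := fun x => g (clamp Rad x)).
  assert (Cfh : contR fh) by (apply cont_on_clamp; auto; lra).
  assert (Cgh : contR gh) by (apply cont_on_clamp; auto; lra).
  destruct (contR_bound gh 0 Rad) as [M [HM HMb]]; auto; try lra.
  exists fh, gh, M. constructor; auto.
  - intros r Hr. unfold fh. rewrite clamp_id; auto.
  - intros r Hr. destruct (Hd r Hr) as [He Hde]. split; auto. unfold gh; rewrite clamp_id; auto; lra.
  - intros r. destruct (Rle_lt_dec r 0) as [Hr|Hr].
    + unfold fh. replace (clamp Rad r) with 0. rewrite H0, Rabs_R0. pose proof (Rabs_pos r). nra.
      unfold clamp, Rmax, Rmin. repeat destruct Rle_dec; lra.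
    + set (s := Rmin Rad r).
      assert (Hs : 0 < s <= Rad) by (unfold s, Rmin; destruct Rle_dec; lra).
      assert (Hfs : fh r = fh s) by (unfold fh, s, clamp, Rmax, Rmin; repeat destruct Rle_dec; lra).
      destruct (MVT_gen fh 0 s gh) as [c [Hc1 Hc2]].
      * rewrite Rmin_left, Rmax_right by lra. intros x Hx.
        destruct (Hd x) as [Hex Hdx]. lra.
        apply is_derive_ext_loc with f.
        apply locally_int with 0 Rad. lra. intros t Ht. unfold fh. rewrite clamp_id; auto; lra.
        unfold gh. rewrite clamp_id by lra. rewrite <- Hdx. apply Derive_correct; auto.
      * intros; apply cont_pt, Cfh.
      * rewrite Rmin_left, Rmax_right in Hc1 by lra.
        assert (fh 0 = 0) by (unfold fh; rewrite clamp_id; auto; lra).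
        rewrite Hfs. replace (fh s) with (gh c * s) by lra.
        rewrite Rabs_mult. specialize (HMb c ltac:(lra)).
        rewrite (Rabs_right s) by lra. rewrite (Rabs_right r) by lra.
        assert (s <= r) by (unfold s; apply Rmin_r).
        pose proof (Rabs_pos (gh c)). nra.
  - intros r Hr. unfold fh. replace (clamp Rad r) with 0. auto.
    unfold clamp, Rmax, Rmin. repeat destruct Rle_dec; lra.
  - intros r Hr. unfold fh. replace (clamp Rad r) with Rad. auto.
    unfold clamp, Rmax, Rmin. repeat destruct Rle_dec; lra.
Qed.

Lemma contR_quot (a b : R -> R) Ma Mb : contR a -> contR b ->
  (forall r, Rabs (a r) <= Ma * Rabs r) -> (forall r, Rabs (b r) <= Mb * Rabs r) -> 0 <= Ma -> 0 <= Mb ->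
  contR (fun r => a r * b r / r).
Proof.
  intros Ca Cb Ba Bb HMa HMb x. destruct (Req_dec x 0) as [->|Hx].
  - apply cont_eps. intros eps Heps. exists (eps / (Ma * Mb + 1)). split.
    apply Rdiv_lt_0_compat; nra.
    intros y Hy. rewrite Rminus_0_r in Hy.
    assert (a 0 = 0). { specialize (Ba 0). rewrite Rabs_R0, Rmult_0_r in Ba. apply Rabs_eq_0. pose proof (Rabs_pos (a 0)); lra. }
    rewrite H. unfold Rdiv at 2. rewrite !Rmult_0_l, Rminus_0_r.
    destruct (Req_dec y 0) as [->|Hy0].
    + unfold Rdiv; rewrite Rinv_0, !Rmult_0_r, Rabs_R0; auto.
    + unfold Rdiv. rewrite !Rabs_mult, Rabs_inv.
      specialize (Ba y); specialize (Bb y).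
      assert (0 < Rabs y) by (apply Rabs_pos_lt; auto).
      assert (Hq : Rabs (a y) * Rabs (b y) * / Rabs y <= Ma * Mb * Rabs y).
      { apply Rmult_le_reg_r with (Rabs y); auto. rewrite Rmult_assoc, Rinv_l by lra.
        pose proof (Rabs_pos (a y)); pose proof (Rabs_pos (b y)).
        replace (Ma * Mb * Rabs y * Rabs y) with ((Ma * Rabs y) * (Mb * Rabs y)) by ring.
        rewrite Rmult_1_r. apply Rmult_le_compat; auto. }
      eapply Rle_lt_trans; [exact Hq|].
      apply Rlt_le_trans with ((Ma*Mb+1) * (eps / (Ma*Mb+1))).
      assert (0 < eps / (Ma*Mb+1)) by (apply Rdiv_lt_0_compat; nra).
      assert (0 <= Ma*Mb) by (apply Rmult_le_pos; auto). nra.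
      right; field; nra.
  - apply (continuous_mult (fun r => a r * b r) (fun r => / r)).
    apply (continuous_mult a b); auto. apply continuous_Rinv; auto.
Qed.

Lemma rep_CR_f Rad f fh gh M : rep Rad f fh gh M -> CR Rad f.
Proof. intros Hr. exists fh; split. apply (rep_fh _ _ _ _ _ Hr). intros r Hr'. apply (rep_eq _ _ _ _ _ Hr); lra. Qed.
Lemma rep_CR_d Rad f fh gh M : rep Rad f fh gh M -> CR Rad (Derive f).
Proof. intros Hr. exists gh; split. apply (rep_gh _ _ _ _ _ Hr). intros r Hr'. apply (rep_der _ _ _ _ _ Hr); lra. Qed.
Lemma rep_CR_q Rad f fh gh M h hh kh N : rep Rad f fh gh M -> rep Rad h hh kh N ->
  CR Rad (fun r => f r * h r / r).
Proof.
  intros H1 H2. exists (fun r => fh r * hh r / r); split.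
  apply contR_quot with M N; try apply H1; try apply H2.
  intros r Hr. rewrite (rep_eq _ _ _ _ _ H1), (rep_eq _ _ _ _ _ H2); auto; lra.
Qed.

Lemma contR_cont_on Rad F : contR F -> cont_on 0 Rad F.
Proof.
  intros H x _ eps Heps. destruct (eps_cont F x (H x) eps Heps) as [d [Hd Hy]].
  exists d; split; auto.
Qed.

Definition lin (c1 : R) (f1 : R -> R) (c2 : R) (f2 : R -> R) := fun r => c1 * f1 r + c2 * f2 r.

Lemma rep_lin Rad c1 f1 fh1 gh1 M1 c2 f2 fh2 gh2 M2 :
  rep Rad f1 fh1 gh1 M1 -> rep Rad f2 fh2 gh2 M2 ->
  rep Rad (lin c1 f1 c2 f2) (lin c1 fh1 c2 fh2) (lin c1 gh1 c2 gh2) (Rabs c1 * M1 + Rabs c2 * M2).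
Proof.
  intros H1 H2. destruct H1 as [rep_fh0 rep_gh0 rep_eq0 rep_der0 rep_M0 rep_bnd0 rep_00 rep_R0].
  destruct H2 as [rep_fh1 rep_gh1 rep_eq1 rep_der1 rep_M1 rep_bnd1 rep_01 rep_R1]. unfold lin. constructor.
  - apply contR_plus; apply contR_mult; auto; apply contR_const.
  - apply contR_plus; apply contR_mult; auto; apply contR_const.
  - intros r Hr. rewrite rep_eq0, rep_eq1; auto.
  - intros r Hr. destruct (rep_der0 r Hr) as [E1 D1]. destruct (rep_der1 r Hr) as [E2 D2].
    assert (Hd : is_derive (fun r => c1 * f1 r + c2 * f2 r) r (c1 * gh1 r + c2 * gh2 r)).
    { apply (is_derive_plus (fun r => c1 * f1 r) (fun r => c2 * f2 r)).
      apply is_derive_scal. rewrite <- D1; apply Derive_correct; auto.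
      apply is_derive_scal. rewrite <- D2; apply Derive_correct; auto. }
    split. eexists; exact Hd. apply is_derive_unique; exact Hd.
  - pose proof (Rabs_pos c1); pose proof (Rabs_pos c2). nra.
  - intros r. eapply Rle_trans. apply Rabs_triang. rewrite !Rabs_mult.
    specialize (rep_bnd0 r); specialize (rep_bnd1 r).
    pose proof (Rabs_pos c1); pose proof (Rabs_pos c2). nra.
  - intros r Hr. rewrite rep_00, rep_01; auto; ring.
  - intros r Hr. rewrite rep_R0, rep_R1; auto; ring.
Qed.

Lemma rep_C1 Rad f fh gh M : 0 < Rad -> rep Rad f fh gh M -> C1_0 Rad f.
Proof.
  intros HR H. destruct H as [rep_fh0 rep_gh0 rep_eq0 rep_der0 rep_M0 rep_bnd0 rep_00 rep_R0].
  refine (conj _ (conj _ (conj _ _))).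
  - intros x Hx eps Heps. destruct (eps_cont fh x (rep_fh0 x) eps Heps) as [d [Hd Hy]].
    exists d; split; auto. intros y Hy' Hyx. rewrite (rep_eq0 y), (rep_eq0 x); auto.
  - exists gh. split. apply contR_cont_on. exact rep_gh0. exact rep_der0.
  - rewrite rep_eq0, rep_00; lra. 
  - rewrite rep_eq0, rep_R0; lra.
Qed.

Definition Dint (a1 a2 b : R) (f h : R -> R) :=
  fun r => a1 * (r * Derive f r * Derive h r) + a2 * (f r * h r / r) + b * (r * f r * h r).
Definition Dform Rad a1 a2 b f h : R := RInt (Dint a1 a2 b f h) 0 Rad.

Lemma RInt_lin (F G : R -> R) c1 c2 a b : ex_RInt F a b -> ex_RInt G a b ->
  RInt (fun r => c1 * F r + c2 * G r) a b = c1 * RInt F a b + c2 * RInt G a b.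
Proof.
  intros HF HG.
  assert (H1 : ex_RInt (fun r => c1 * F r) a b) by (apply (ex_RInt_scal F a b c1); auto).
  assert (H2 : ex_RInt (fun r => c2 * G r) a b) by (apply (ex_RInt_scal G a b c2); auto).
  transitivity (plus (RInt (fun r => c1 * F r) a b) (RInt (fun r => c2 * G r) a b)).
  exact (RInt_plus _ _ a b H1 H2).
  unfold plus; simpl. f_equal. exact (RInt_scal F a b c1 HF). exact (RInt_scal G a b c2 HG).
Qed.

Lemma ex_RInt_lin (F G : R -> R) c1 c2 a b : ex_RInt F a b -> ex_RInt G a b ->
  ex_RInt (fun r => c1 * F r + c2 * G r) a b.
Proof.
  intros HF HG.
  apply (ex_RInt_plus (fun r => c1 * F r) (fun r => c2 * G r)).
  apply (ex_RInt_scal F a b c1); auto. apply (ex_RInt_scal G a b c2); auto.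
Qed.

Lemma CR_Dint Rad a1 a2 b f h : 0 < Rad -> C1_0 Rad f -> C1_0 Rad h -> CR Rad (Dint a1 a2 b f h).
Proof.
  intros HR Hf Hh. destruct (C1_rep Rad f HR Hf) as [fh [gh [M Hr1]]].
  destruct (C1_rep Rad h HR Hh) as [hh [kh [N Hr2]]].
  unfold Dint. apply CR_plus; [apply CR_plus|].
  - apply CR_mult. apply CR_const. apply CR_mult. apply CR_mult. apply CR_id.
    eapply rep_CR_d; eauto. eapply rep_CR_d; eauto.
  - apply CR_mult. apply CR_const. eapply rep_CR_q; eauto.
  - apply CR_mult. apply CR_const. apply CR_mult. apply CR_mult. apply CR_id.
    eapply rep_CR_f; eauto. eapply rep_CR_f; eauto.
Qed.

Lemma ex_RInt_Dint Rad a1 a2 b f h : 0 < Rad -> C1_0 Rad f -> C1_0 Rad h -> ex_RInt (Dint a1 a2 b f h) 0 Rad.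
Proof. intros. apply CR_ex_RInt. lra. apply CR_Dint; auto. Qed.

Lemma C1_lin Rad c1 f1 c2 f2 : 0 < Rad -> C1_0 Rad f1 -> C1_0 Rad f2 -> C1_0 Rad (lin c1 f1 c2 f2).
Proof.
  intros HR H1 H2. destruct (C1_rep Rad f1 HR H1) as [fh [gh [M Hr1]]].
  destruct (C1_rep Rad f2 HR H2) as [hh [kh [N Hr2]]].
  eapply rep_C1; eauto. eapply rep_lin; eauto.
Qed.

Lemma Derive_lin Rad c1 f1 c2 f2 r : 0 < Rad -> C1_0 Rad f1 -> C1_0 Rad f2 -> 0 < r < Rad ->
  Derive (lin c1 f1 c2 f2) r = c1 * Derive f1 r + c2 * Derive f2 r.
Proof.
  intros HR H1 H2 Hr. destruct (C1_rep Rad f1 HR H1) as [fh [gh [M Hr1]]].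
  destruct (C1_rep Rad f2 HR H2) as [hh [kh [N Hr2]]].
  pose proof (rep_lin Rad c1 f1 fh gh M c2 f2 hh kh N Hr1 Hr2) as H3.
  rewrite (proj2 (rep_der _ _ _ _ _ H3 r Hr)), (proj2 (rep_der _ _ _ _ _ Hr1 r Hr)), (proj2 (rep_der _ _ _ _ _ Hr2 r Hr)).
  reflexivity.
Qed.

Lemma Dform_lin_l Rad a1 a2 b c1 f1 c2 f2 h : 0 < Rad -> C1_0 Rad f1 -> C1_0 Rad f2 -> C1_0 Rad h ->
  Dform Rad a1 a2 b (lin c1 f1 c2 f2) h = c1 * Dform Rad a1 a2 b f1 h + c2 * Dform Rad a1 a2 b f2 h.
Proof.
  intros HR H1 H2 Hh. unfold Dform. rewrite <- RInt_lin by (apply ex_RInt_Dint; auto).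
  apply RInt_ext. intros x Hx. rewrite Rmin_left in Hx by lra. rewrite Rmax_right in Hx by lra.
  unfold Dint. rewrite (Derive_lin Rad) by auto. unfold lin. rring.
Qed.

Lemma Dform_sym Rad a1 a2 b f h : Dform Rad a1 a2 b f h = Dform Rad a1 a2 b h f.
Proof. unfold Dform. apply RInt_ext. intros x _. unfold Dint. rring. Qed.

Lemma Dform_lin_r Rad a1 a2 b c1 f1 c2 f2 h : 0 < Rad -> C1_0 Rad f1 -> C1_0 Rad f2 -> C1_0 Rad h ->
  Dform Rad a1 a2 b h (lin c1 f1 c2 f2) = c1 * Dform Rad a1 a2 b h f1 + c2 * Dform Rad a1 a2 b h f2.
Proof.
  intros. rewrite Dform_sym, (Dform_sym Rad a1 a2 b h f1), (Dform_sym Rad a1 a2 b h f2).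
  apply Dform_lin_l; auto.
Qed.

Lemma Dform_coef Rad a1 a2 b f h : 0 < Rad -> C1_0 Rad f -> C1_0 Rad h ->
  Dform Rad a1 a2 b f h = a1 * Dform Rad 1 0 0 f h + a2 * Dform Rad 0 1 0 f h + b * Dform Rad 0 0 1 f h.
Proof.
  intros HR Hf Hh. unfold Dform.
  rewrite <- (RInt_lin (Dint 1 0 0 f h) (Dint 0 1 0 f h) a1 a2) by (apply ex_RInt_Dint; auto).
  rewrite <- (Rmult_1_l (RInt (fun r => a1 * Dint 1 0 0 f h r + a2 * Dint 0 1 0 f h r) 0 Rad)).
  rewrite <- RInt_lin. 2: apply ex_RInt_lin; apply ex_RInt_Dint; auto. 2: apply ex_RInt_Dint; auto.
  apply RInt_ext. intros x _. unfold Dint. rring.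
Qed.

Lemma Dform_nonneg Rad a1 a2 b f : 0 < Rad -> C1_0 Rad f -> 0 <= a1 -> 0 <= a2 -> 0 <= b ->
  0 <= Dform Rad a1 a2 b f f.
Proof.
  intros HR Hf H1 H2 H3. apply RInt_ge_0. lra. apply ex_RInt_Dint; auto.
  intros x Hx. unfold Dint.
  assert (0 <= x * Derive f x * Derive f x) by (rewrite Rmult_assoc; apply Rmult_le_pos; [lra| apply Rle_0_sqr]).
  assert (0 <= f x * f x / x) by (apply Rdiv_le_0_compat; [apply Rle_0_sqr|lra]).
  assert (0 <= x * f x * f x) by (rewrite Rmult_assoc; apply Rmult_le_pos; [lra| apply Rle_0_sqr]).
  assert (0 <= a1 * (x * Derive f x * Derive f x)) by (apply Rmult_le_pos; auto).
  assert (0 <= a2 * (f x * f x / x)) by (apply Rmult_le_pos; auto).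
  assert (0 <= b * (x * f x * f x)) by (apply Rmult_le_pos; auto). lra.
Qed.

Lemma discr A B C : 0 <= C -> (forall t, 0 <= A + 2 * t * B + t * t * C) -> B * B <= A * C.
Proof.
  intros HC H. destruct HC as [Hc|Hc].
  - specialize (H (- B / C)).
    replace (A + 2 * (- B / C) * B + - B / C * (- B / C) * C) with (A - B * B / C) in H by (field; lra).
    assert (H0 : B * B / C <= A) by lra.
    apply Rmult_le_reg_r with (/ C). apply Rinv_0_lt_compat; lra.
    replace (A * C * / C) with A by (field; lra). unfold Rdiv in H0. lra.
  - subst. destruct (Req_dec B 0). subst; nra.
    specialize (H (-(Rabs A + 1) / (2 * B))).
    replace (A + 2 * (- (Rabs A + 1) / (2 * B)) * B + - (Rabs A + 1) / (2 * B) * (- (Rabs A + 1) / (2 * B)) * 0) with (A - (Rabs A + 1)) in H by (field; auto).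
    pose proof (Rle_abs A). lra.
Qed.

Lemma Dform_quad Rad a1 a2 b f h t : 0 < Rad -> C1_0 Rad f -> C1_0 Rad h ->
  Dform Rad a1 a2 b (lin 1 f t h) (lin 1 f t h) =
  Dform Rad a1 a2 b f f + 2 * t * Dform Rad a1 a2 b f h + t * t * Dform Rad a1 a2 b h h.
Proof.
  intros HR Hf Hh. rewrite Dform_lin_l; auto; [|apply C1_lin; auto].
  rewrite !Dform_lin_r; auto. rewrite (Dform_sym Rad a1 a2 b h f). ring.
Qed.

Lemma Dform_CS Rad a1 a2 b f h : 0 < Rad -> C1_0 Rad f -> C1_0 Rad h -> 0 <= a1 -> 0 <= a2 -> 0 <= b ->
  Dform Rad a1 a2 b f h * Dform Rad a1 a2 b f h <= Dform Rad a1 a2 b f f * Dform Rad a1 a2 b h h.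
Proof.
  intros. apply discr. apply Dform_nonneg; auto.
  intros t. rewrite <- Dform_quad; auto. apply Dform_nonneg; auto. apply C1_lin; auto.
Qed.

Lemma Dform_CS_abs Rad a1 a2 b f h : 0 < Rad -> C1_0 Rad f -> C1_0 Rad h -> 0 <= a1 -> 0 <= a2 -> 0 <= b ->
  Rabs (Dform Rad a1 a2 b f h) <= sqrt (Dform Rad a1 a2 b f f) * sqrt (Dform Rad a1 a2 b h h).
Proof.
  intros. rewrite <- sqrt_mult by (apply Dform_nonneg; auto).
  rewrite <- sqrt_Rsqr_abs. apply sqrt_le_1_alt. unfold Rsqr. apply Dform_CS; auto.
Qed.

Definition Nf Rad f := Dform Rad 1 1 0 f f.

Lemma Hnorm2_Nf Rad f : 0 < Rad -> Hnorm2 Rad f = Nf Rad f.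
Proof. intros. unfold Hnorm2, Nf, Dform. apply RInt_ext. intros. unfold Dint. simpl. rring. Qed.

Lemma Nf_nonneg Rad f : 0 < Rad -> C1_0 Rad f -> 0 <= Nf Rad f.
Proof. intros; apply Dform_nonneg; auto; lra. Qed.

Lemma sup_bound Rad f x : 0 < Rad -> C1_0 Rad f -> 0 <= x <= Rad -> f x * f x <= Nf Rad f.
Proof.
  intros HR Hf Hx. pose proof (Nf_nonneg Rad f HR Hf) as HN0.
  destruct (C1_rep Rad f HR Hf) as [fh [gh [M Hr]]].
  destruct Hr as [Cf Cg Eq Der HM Bnd Z0 ZR].
  destruct (Req_dec x 0) as [->|Hx0].
  { rewrite Eq, Z0 by lra. lra. }
  destruct (Req_dec x Rad) as [->|HxR].
  { rewrite Eq, ZR by lra. lra. }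
  assert (Hx' : 0 < x < Rad) by lra. clear Hx Hx0 HxR.
  set (G := fun r => r * gh r * gh r + fh r * fh r / r).
  assert (CG : contR G).
  { unfold G. apply contR_plus. apply contR_mult. apply contR_mult. apply contR_id. auto. auto.
    apply contR_quot with M M; auto. }
  assert (G0 : forall r, 0 <= r -> 0 <= G r).
  { intros r Hr. unfold G. destruct Hr as [Hr|Hr].
    assert (0 <= r * gh r * gh r) by (rewrite Rmult_assoc; apply Rmult_le_pos; [lra| apply Rle_0_sqr]).
    assert (0 <= fh r * fh r / r) by (apply Rdiv_le_0_compat; [apply Rle_0_sqr|lra]). lra.
    subst. unfold Rdiv; rewrite Rinv_0. lra. }
  assert (HNG : Nf Rad f = RInt G 0 Rad).
  { unfold Nf, Dform. apply RInt_ext. intros r Hr. rewrite Rmin_left in Hr by lra. rewrite Rmax_right in Hr by lra.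
    unfold Dint, G. destruct (Der r Hr) as [_ ->]. rewrite Eq by lra. rring. }
  assert (exG : forall a b, ex_RInt G a b).
  { intros. apply (@ex_RInt_continuous R_CompleteNormedModule). intros; apply CG. }
  assert (Key : forall e, 0 < e < x -> fh x * fh x - fh e * fh e <= Nf Rad f).
  { intros e He.
    assert (HI : is_RInt (fun r => 2 * fh r * gh r) e x (fh x * fh x - fh e * fh e)).
    { apply (is_RInt_derive (fun r => fh r * fh r) (fun r => 2 * fh r * gh r)).
      - intros y Hy. rewrite Rmin_left in Hy by lra. rewrite Rmax_right in Hy by lra.
        assert (Hd : is_derive fh y (gh y)).
        { destruct (Der y) as [Ed Dd]. lra. apply is_derive_ext_loc with f.
          apply locally_int with 0 Rad. lra. intros; apply Eq; lra.
          rewrite <- Dd. apply Derive_correct; auto. }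
        pose proof (is_derive_mult fh fh y (gh y) (gh y) Hd Hd) as Hm.
        replace (2 * fh y * gh y) with (plus (mult (gh y) (fh y)) (mult (fh y) (gh y))).
        apply Hm. intros; apply Rmult_comm.
        unfold plus, mult; simpl. ring.
      - intros y _. apply (continuous_mult (fun r => 2 * fh r) gh).
        apply (continuous_mult (fun _ => 2) fh). apply continuous_const. apply Cf. apply Cg. }
    assert (Ex : ex_RInt (fun r => 2 * fh r * gh r) e x) by (eexists; exact HI).
    assert (Eq2 : RInt (fun r => 2 * fh r * gh r) e x = fh x * fh x - fh e * fh e) by (apply (@is_RInt_unique R_CompleteNormedModule); exact HI).
    rewrite <- Eq2.
    apply Rle_trans with (RInt G e x).
    { apply RInt_le. lra. exact Ex. apply exG.
      intros r Hr. unfold G.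
      assert (Hr0 : 0 < r) by lra.
      assert (r * (fh r * fh r / r) = fh r * fh r) by (field; lra).
      assert (0 <= r * (r * gh r * gh r + fh r * fh r / r) - r * (2 * fh r * gh r)).
      { replace (r * (r * gh r * gh r + fh r * fh r / r) - r * (2 * fh r * gh r)) with ((r * gh r - fh r) * (r * gh r - fh r)).
        apply Rle_0_sqr. field; lra. }
      nra. }
    rewrite HNG. rewrite <- (RInt_Chasles G 0 e Rad) by auto.
    rewrite <- (RInt_Chasles G e x Rad) by auto.
    assert (0 <= RInt G 0 e) by (apply RInt_ge_0; try lra; auto; intros; apply G0; lra).
    assert (0 <= RInt G x Rad) by (apply RInt_ge_0; try lra; auto; intros; apply G0; lra).
    change (plus (RInt G 0 e) (plus (RInt G e x) (RInt G x Rad))) with (RInt G 0 e + (RInt G e x + RInt G x Rad)).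
    lra. }
  rewrite Eq by lra.
  destruct (Rle_or_lt (fh x * fh x) (Nf Rad f)) as [Hle|Hlt]; auto. exfalso.
  set (d := fh x * fh x - Nf Rad f).
  assert (Hd : 0 < d) by (unfold d; lra).
  destruct (eps_cont fh 0 (Cf 0) (Rmin 1 d) ltac:(apply Rmin_pos; lra)) as [de [Hde Hy]].
  set (e := Rmin (de / 2) (x / 2)).
  assert (He : 0 < e < x) by (unfold e; split; [apply Rmin_pos; lra| pose proof (Rmin_r (de/2) (x/2)); lra]).
  specialize (Key e He). specialize (Hy e).
  rewrite (Z0 0) in Hy by lra. rewrite !Rminus_0_r in Hy.
  assert (Hb : Rabs e < de) by (rewrite Rabs_right by lra; pose proof (Rmin_l (de/2) (x/2)); unfold e in *; lra).
  specialize (Hy Hb).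
  assert (Rabs (fh e) < 1) by (pose proof (Rmin_l 1 d); lra).
  assert (Rabs (fh e) < d) by (pose proof (Rmin_r 1 d); lra).
  assert (fh e * fh e <= Rabs (fh e)).
  { pose proof (Rsqr_abs (fh e)). unfold Rsqr in *. pose proof (Rabs_pos (fh e)). nra. }
  unfold d in *. lra.
Qed.

Lemma sup_abs Rad f x : 0 < Rad -> C1_0 Rad f -> 0 <= x <= Rad -> Rabs (f x) <= sqrt (Nf Rad f).
Proof.
  intros. rewrite <- sqrt_Rsqr_abs. apply sqrt_le_1_alt. unfold Rsqr. apply sup_bound; auto.
Qed.

Lemma RInt_abs_bnd (F : R -> R) Rad c : 0 <= Rad -> ex_RInt F 0 Rad -> (forall r, 0 < r < Rad -> Rabs (F r) <= c) ->
  Rabs (RInt F 0 Rad) <= c * Rad.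
Proof.
  intros HR HF Hb.
  assert (Hc : forall d : R, RInt (fun _ => d) 0 Rad = d * Rad).
  { intros d. rewrite RInt_const. unfold scal; simpl. unfold mult; simpl. ring. }
  assert (Hex : forall d : R, ex_RInt (fun _ : R => d) 0 Rad) by (intros; apply (@ex_RInt_const R_CompleteNormedModule)).
  apply Rabs_le. split.
  - replace (- (c * Rad)) with ((- c) * Rad) by ring. rewrite <- Hc. apply RInt_le; auto. intros r Hr. specialize (Hb r Hr).
    apply Rabs_le_between in Hb. lra.
  - rewrite <- Hc. apply RInt_le; auto. intros r Hr. specialize (Hb r Hr). apply Rabs_le_between in Hb. lra.
Qed.

Definition cD Rad a1 a2 b := Rabs a1 + Rabs (a2 - a1) + Rabs b * Rad * Rad.

Lemma sqrt_pos' x : 0 <= sqrt x. Proof. apply sqrt_pos. Qed.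

Lemma Dform_bound Rad a1 a2 b f h : 0 < Rad -> C1_0 Rad f -> C1_0 Rad h ->
  Rabs (Dform Rad a1 a2 b f h) <= cD Rad a1 a2 b * sqrt (Nf Rad f) * sqrt (Nf Rad h).
Proof.
  intros HR Hf Hh.
  assert (E : Dform Rad a1 a2 b f h = a1 * Dform Rad 1 1 0 f h + (a2 - a1) * Dform Rad 0 1 0 f h + b * Dform Rad 0 0 1 f h).
  { rewrite (Dform_coef Rad a1 a2 b), (Dform_coef Rad 1 1 0), (Dform_coef Rad 0 1 0), (Dform_coef Rad 0 0 1); auto. ring. }
  assert (P : forall g, C1_0 Rad g -> Dform Rad 0 1 0 g g <= Nf Rad g).
  { intros g Hg. unfold Nf. rewrite (Dform_coef Rad 1 1 0), (Dform_coef Rad 0 1 0); auto.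
    pose proof (Dform_nonneg Rad 1 0 0 g HR Hg). rewrite (Dform_coef Rad 1 0 0) in H; auto. lra. }
  set (sf := sqrt (Nf Rad f)). set (sh := sqrt (Nf Rad h)).
  assert (0 <= sf) by apply sqrt_pos. assert (0 <= sh) by apply sqrt_pos.
  assert (B1 : Rabs (Dform Rad 1 1 0 f h) <= sf * sh) by (apply Dform_CS_abs; auto; lra).
  assert (B2 : Rabs (Dform Rad 0 1 0 f h) <= sf * sh).
  { eapply Rle_trans. apply Dform_CS_abs; auto; lra.
    apply Rmult_le_compat; try apply sqrt_pos; apply sqrt_le_1_alt; apply P; auto. }
  assert (B3 : Rabs (Dform Rad 0 0 1 f h) <= Rad * Rad * (sf * sh)).
  { unfold Dform. replace (Rad * Rad * (sf * sh)) with ((Rad * sf * sh) * Rad) by ring.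
    apply RInt_abs_bnd. lra. apply ex_RInt_Dint; auto.
    intros r Hr. unfold Dint. rewrite !Rmult_0_l, !Rplus_0_l, Rmult_1_l.
    rewrite !Rabs_mult. rewrite (Rabs_right r) by lra.
    pose proof (sup_abs Rad f r HR Hf ltac:(lra)). pose proof (sup_abs Rad h r HR Hh ltac:(lra)).
    pose proof (Rabs_pos (f r)). pose proof (Rabs_pos (h r)).
    fold sf sh in H1, H2. apply Rmult_le_compat; try nra. }
  rewrite E. unfold cD. fold sf sh.
  eapply Rle_trans. apply Rabs_triang. eapply Rle_trans. apply Rplus_le_compat_r. apply Rabs_triang.
  rewrite !Rabs_mult.
  pose proof (Rabs_pos a1). pose proof (Rabs_pos (a2 - a1)). pose proof (Rabs_pos b).
  assert (0 <= sf * sh) by nra.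
  assert (Rabs a1 * Rabs (Dform Rad 1 1 0 f h) <= Rabs a1 * (sf * sh)) by (apply Rmult_le_compat_l; auto).
  assert (Rabs (a2 - a1) * Rabs (Dform Rad 0 1 0 f h) <= Rabs (a2 - a1) * (sf * sh)) by (apply Rmult_le_compat_l; auto).
  assert (Rabs b * Rabs (Dform Rad 0 0 1 f h) <= Rabs b * (Rad * Rad * (sf * sh))) by (apply Rmult_le_compat_l; auto).
  nra.
Qed.

Record phiOK (phi dphi : R -> R) (K : R) : Prop := {
  ph_der : forall s, is_derive phi s (dphi s);
  ph_0 : dphi 0 = 0;
  ph_lip : forall a b, Rabs (dphi a - dphi b) <= K * Rabs (a - b);
  ph_K : 0 <= K }.

Lemma phi_cont phi dphi K : phiOK phi dphi K -> contR phi.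
Proof. intros H x. apply (@ex_derive_continuous R_AbsRing R_NormedModule). eexists; apply (ph_der _ _ _ H). Qed.

Lemma dphi_cont phi dphi K : phiOK phi dphi K -> contR dphi.
Proof.
  intros H x. apply cont_eps. intros eps Heps. pose proof (ph_K _ _ _ H).
  exists (eps / (K + 1)). split. apply Rdiv_lt_0_compat; lra.
  intros y Hy. eapply Rle_lt_trans. apply (ph_lip _ _ _ H).
  apply Rle_lt_trans with (K * (eps / (K+1))). apply Rmult_le_compat_l; lra.
  apply Rlt_le_trans with ((K+1) * (eps / (K+1))).
  assert (0 < eps / (K+1)) by (apply Rdiv_lt_0_compat; lra). nra. right; field; lra.
Qed.

Lemma dphi_bnd phi dphi K a : phiOK phi dphi K -> Rabs (dphi a) <= K * Rabs a.
Proof. intros H. pose proof (ph_lip _ _ _ H a 0). rewrite (ph_0 _ _ _ H), !Rminus_0_r in H0. auto. Qed.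

Lemma taylor phi dphi K a h : phiOK phi dphi K -> Rabs (phi (a + h) - phi a - dphi a * h) <= K * (h * h).
Proof.
  intros H. destruct (MVT_gen phi a (a + h) dphi) as [c [Hc Ec]].
  - intros; apply (ph_der _ _ _ H).
  - intros; apply cont_pt. eapply phi_cont; eauto.
  - replace (a + h - a) with h in Ec by ring. rewrite Ec.
    replace (dphi c * h - dphi a * h) with ((dphi c - dphi a) * h) by ring.
    rewrite Rabs_mult. pose proof (ph_lip _ _ _ H c a). pose proof (ph_K _ _ _ H).
    assert (Rabs (c - a) <= Rabs h).
    { unfold Rmin, Rmax in Hc. destruct Rle_dec; unfold Rabs; repeat destruct Rcase_abs; lra. }
    pose proof (Rabs_pos h). pose proof (Rabs_pos (dphi c - dphi a)).
    apply Rle_trans with (K * Rabs h * Rabs h). apply Rmult_le_compat_r; auto. nra.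
    rewrite Rmult_assoc, <- Rabs_mult, Rabs_right. lra. apply Rle_ge, Rle_0_sqr.
Qed.

Lemma CR_minus Rad F1 F2 : CR Rad F1 -> CR Rad F2 -> CR Rad (fun r => F1 r - F2 r).
Proof.
  intros H1 H2. apply CR_ext with (fun r => F1 r + (-1) * F2 r).
  apply CR_plus; auto. apply CR_mult; auto. apply CR_const. intros; ring.
Qed.

Definition Jphi Rad (phi f : R -> R) : R := RInt (fun r => r * phi (f r)) 0 Rad.
Definition Kphi Rad (dphi f h : R -> R) : R := RInt (fun r => r * dphi (f r) * h r) 0 Rad.

Lemma ex_J Rad phi f : 0 < Rad -> contR phi -> C1_0 Rad f -> ex_RInt (fun r => r * phi (f r)) 0 Rad.
Proof.
  intros HR Hp Hf. destruct (C1_rep Rad f HR Hf) as [fh [gh [M Hr]]]. apply CR_ex_RInt. lra.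
  apply CR_mult. apply CR_id. apply CR_comp; auto. eapply rep_CR_f; eauto.
Qed.

Lemma ex_K Rad dphi f h : 0 < Rad -> contR dphi -> C1_0 Rad f -> C1_0 Rad h -> ex_RInt (fun r => r * dphi (f r) * h r) 0 Rad.
Proof.
  intros HR Hp Hf Hh. destruct (C1_rep Rad f HR Hf) as [fh [gh [M Hr]]].
  destruct (C1_rep Rad h HR Hh) as [hh [kh [N Hr2]]]. apply CR_ex_RInt. lra.
  apply CR_mult. apply CR_mult. apply CR_id. apply CR_comp; auto. eapply rep_CR_f; eauto. eapply rep_CR_f; eauto.
Qed.

Definition Ff Rad a1 a2 b phi f : R := 1/2 * Dform Rad a1 a2 b f f + Jphi Rad phi f.
Definition Lf Rad a1 a2 b dphi f h : R := Dform Rad a1 a2 b f h + Kphi Rad dphi f h.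

Definition cc1 Rad a1 a2 b K := cD Rad a1 a2 b + K * Rad * Rad.

Lemma cD_pos Rad a1 a2 b : 0 < Rad -> 0 <= cD Rad a1 a2 b.
Proof. intros. unfold cD. pose proof (Rabs_pos a1); pose proof (Rabs_pos (a2 - a1)); pose proof (Rabs_pos b).
  assert (0 <= Rabs b * Rad * Rad) by (apply Rmult_le_pos; [apply Rmult_le_pos|]; lra). lra. Qed.

Lemma LE1 Rad a1 a2 b phi dphi K f h : 0 < Rad -> phiOK phi dphi K -> C1_0 Rad f -> C1_0 Rad h ->
  Rabs (Lf Rad a1 a2 b dphi f h) <= cc1 Rad a1 a2 b K * sqrt (Nf Rad f) * sqrt (Nf Rad h).
Proof.
  intros HR Hp Hf Hh. unfold Lf, cc1.
  set (sf := sqrt (Nf Rad f)). set (sh := sqrt (Nf Rad h)).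
  assert (0 <= sf) by apply sqrt_pos. assert (0 <= sh) by apply sqrt_pos. pose proof (ph_K _ _ _ Hp).
  pose proof (Dform_bound Rad a1 a2 b f h HR Hf Hh). fold sf sh in H2.
  assert (Rabs (Kphi Rad dphi f h) <= K * Rad * Rad * sf * sh).
  { unfold Kphi. replace (K * Rad * Rad * sf * sh) with ((K * Rad * sf * sh) * Rad) by ring.
    apply RInt_abs_bnd. lra. apply ex_K; auto. eapply dphi_cont; eauto.
    intros r Hr. rewrite !Rabs_mult, (Rabs_right r) by lra.
    pose proof (sup_abs Rad f r HR Hf ltac:(lra)). pose proof (sup_abs Rad h r HR Hh ltac:(lra)). fold sf sh in H3, H4.
    pose proof (dphi_bnd _ _ _ (f r) Hp).
    pose proof (Rabs_pos (f r)). pose proof (Rabs_pos (h r)). pose proof (Rabs_pos (dphi (f r))).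
    assert (Rabs (dphi (f r)) <= K * sf) by (eapply Rle_trans; [exact H5|]; apply Rmult_le_compat_l; auto).
    apply Rle_trans with (Rad * (K * sf) * sh).
    apply Rmult_le_compat; try nra. right; ring. }
  eapply Rle_trans. apply Rabs_triang. nra.
Qed.

Lemma Kphi_diff Rad dphi f g h : 0 < Rad -> contR dphi -> C1_0 Rad f -> C1_0 Rad g -> C1_0 Rad h ->
  Kphi Rad dphi f h - Kphi Rad dphi g h = RInt (fun r => r * (dphi (f r) - dphi (g r)) * h r) 0 Rad.
Proof.
  intros. unfold Kphi. rewrite <- (Rmult_1_l (RInt (fun r => r * dphi (f r) * h r) 0 Rad)).
  replace (1 * RInt (fun r => r * dphi (f r) * h r) 0 Rad - RInt (fun r => r * dphi (g r) * h r) 0 Rad)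
    with (1 * RInt (fun r => r * dphi (f r) * h r) 0 Rad + (-1) * RInt (fun r => r * dphi (g r) * h r) 0 Rad) by ring.
  rewrite <- RInt_lin by (apply ex_K; auto). apply RInt_ext. intros; rring.
Qed.

Lemma LE2 Rad a1 a2 b phi dphi K f g h : 0 < Rad -> phiOK phi dphi K -> C1_0 Rad f -> C1_0 Rad g -> C1_0 Rad h ->
  Rabs (Lf Rad a1 a2 b dphi f h - Lf Rad a1 a2 b dphi g h) <= cc1 Rad a1 a2 b K * sqrt (Nf Rad (lin 1 f (-1) g)) * sqrt (Nf Rad h).
Proof.
  intros HR Hp Hf Hg Hh. unfold Lf, cc1.
  assert (Hd : C1_0 Rad (lin 1 f (-1) g)) by (apply C1_lin; auto).
  set (sf := sqrt (Nf Rad (lin 1 f (-1) g))). set (sh := sqrt (Nf Rad h)).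
  assert (0 <= sf) by apply sqrt_pos. assert (0 <= sh) by apply sqrt_pos. pose proof (ph_K _ _ _ Hp).
  assert (ED : Dform Rad a1 a2 b f h - Dform Rad a1 a2 b g h = Dform Rad a1 a2 b (lin 1 f (-1) g) h).
  { rewrite Dform_lin_l; auto. ring. }
  pose proof (Dform_bound Rad a1 a2 b _ h HR Hd Hh). fold sf sh in H2.
  assert (Rabs (Kphi Rad dphi f h - Kphi Rad dphi g h) <= K * Rad * Rad * sf * sh).
  { rewrite Kphi_diff; auto. 2: eapply dphi_cont; eauto.
    replace (K * Rad * Rad * sf * sh) with ((K * Rad * sf * sh) * Rad) by ring.
    apply RInt_abs_bnd. lra.
    { destruct (C1_rep Rad f HR Hf) as [fh [gh [M Hr]]]. destruct (C1_rep Rad g HR Hg) as [fh' [gh' [M' Hr']]].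
      destruct (C1_rep Rad h HR Hh) as [hh [kh [N Hr2]]]. apply CR_ex_RInt. lra.
      pose proof (dphi_cont _ _ _ Hp).
      apply CR_mult. apply CR_mult. apply CR_id. apply CR_minus. apply CR_comp; auto. eapply rep_CR_f; eauto.
      apply CR_comp; auto. eapply rep_CR_f; eauto. eapply rep_CR_f; eauto. }
    intros r Hr. rewrite !Rabs_mult, (Rabs_right r) by lra.
    pose proof (sup_abs Rad _ r HR Hd ltac:(lra)). pose proof (sup_abs Rad h r HR Hh ltac:(lra)). fold sf sh in H3, H4.
    unfold lin in H3. replace (1 * f r + -1 * g r) with (f r - g r) in H3 by ring.
    pose proof (ph_lip _ _ _ Hp (f r) (g r)).
    pose proof (Rabs_pos (f r - g r)). pose proof (Rabs_pos (h r)). pose proof (Rabs_pos (dphi (f r) - dphi (g r))).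
    assert (Rabs (dphi (f r) - dphi (g r)) <= K * sf) by (eapply Rle_trans; [exact H5|]; apply Rmult_le_compat_l; auto).
    apply Rle_trans with (Rad * (K * sf) * sh).
    apply Rmult_le_compat; try nra. right; ring. }
  replace (Dform Rad a1 a2 b f h + Kphi Rad dphi f h - (Dform Rad a1 a2 b g h + Kphi Rad dphi g h))
    with ((Dform Rad a1 a2 b f h - Dform Rad a1 a2 b g h) + (Kphi Rad dphi f h - Kphi Rad dphi g h)) by ring.
  rewrite ED. eapply Rle_trans. apply Rabs_triang. nra.
Qed.

Definition cc3 Rad a1 a2 b K := cD Rad a1 a2 b / 2 + K * Rad * Rad.

Lemma sqrt_sq_N Rad f : 0 < Rad -> C1_0 Rad f -> sqrt (Nf Rad f) * sqrt (Nf Rad f) = Nf Rad f.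
Proof. intros. apply sqrt_sqrt. apply Nf_nonneg; auto. Qed.

Lemma LE3 Rad a1 a2 b phi dphi K f h : 0 < Rad -> phiOK phi dphi K -> C1_0 Rad f -> C1_0 Rad h ->
  Rabs (Ff Rad a1 a2 b phi (lin 1 f 1 h) - Ff Rad a1 a2 b phi f - Lf Rad a1 a2 b dphi f h) <= cc3 Rad a1 a2 b K * Nf Rad h.
Proof.
  intros HR Hp Hf Hh. unfold Ff, Lf, cc3.
  rewrite Dform_quad; auto.
  pose proof (phi_cont _ _ _ Hp) as Cp. pose proof (dphi_cont _ _ _ Hp) as Cd.
  assert (EJ : Jphi Rad phi (lin 1 f 1 h) - Jphi Rad phi f - Kphi Rad dphi f h =
     RInt (fun r => r * (phi (f r + h r) - phi (f r) - dphi (f r) * h r)) 0 Rad).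
  { unfold Jphi, Kphi.
    replace (RInt (fun r => r * phi (lin 1 f 1 h r)) 0 Rad - RInt (fun r => r * phi (f r)) 0 Rad -
      RInt (fun r => r * dphi (f r) * h r) 0 Rad) with
      (1 * (1 * RInt (fun r => r * phi (lin 1 f 1 h r)) 0 Rad + (-1) * RInt (fun r => r * phi (f r)) 0 Rad) +
       (-1) * RInt (fun r => r * dphi (f r) * h r) 0 Rad) by ring.
    assert (X1 := ex_J Rad phi (lin 1 f 1 h) HR Cp (C1_lin Rad 1 f 1 h HR Hf Hh)).
    assert (X2 := ex_J Rad phi f HR Cp Hf). assert (X3 := ex_K Rad dphi f h HR Cd Hf Hh).
    rewrite <- (RInt_lin _ _ 1 (-1) 0 Rad X1 X2).
    rewrite <- (RInt_lin _ _ 1 (-1) 0 Rad (ex_RInt_lin _ _ 1 (-1) 0 Rad X1 X2) X3).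
    apply RInt_ext. intros. unfold lin. rewrite !Rmult_1_l. rring. }
  pose proof (Dform_bound Rad a1 a2 b h h HR Hh Hh) as Bd. rewrite Rmult_assoc, sqrt_sq_N in Bd; auto.
  pose proof (ph_K _ _ _ Hp).
  assert (BJ : Rabs (RInt (fun r => r * (phi (f r + h r) - phi (f r) - dphi (f r) * h r)) 0 Rad) <= K * Rad * Rad * Nf Rad h).
  { replace (K * Rad * Rad * Nf Rad h) with ((Rad * K * Nf Rad h) * Rad) by ring.
    apply RInt_abs_bnd. lra.
    { destruct (C1_rep Rad f HR Hf) as [fh [gh [M Hr]]]. destruct (C1_rep Rad h HR Hh) as [hh [kh [N Hr2]]].
      apply CR_ex_RInt. lra.
      apply CR_mult. apply CR_id. apply CR_minus. apply CR_minus. apply CR_comp; auto. apply CR_plus; eapply rep_CR_f; eauto.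
      apply CR_comp; auto. eapply rep_CR_f; eauto. apply CR_mult. apply CR_comp; auto. eapply rep_CR_f; eauto. eapply rep_CR_f; eauto. }
    intros r Hr. rewrite Rabs_mult, (Rabs_right r) by lra.
    pose proof (taylor _ _ _ (f r) (h r) Hp). pose proof (sup_bound Rad h r HR Hh ltac:(lra)).
    pose proof (Rabs_pos (phi (f r + h r) - phi (f r) - dphi (f r) * h r)).
    apply Rle_trans with (Rad * (K * Nf Rad h)). apply Rmult_le_compat; try lra.
    eapply Rle_trans; [exact H0|]. apply Rmult_le_compat_l; auto. right; ring. }
  replace (1 / 2 * (Dform Rad a1 a2 b f f + 2 * 1 * Dform Rad a1 a2 b f h + 1 * 1 * Dform Rad a1 a2 b h h) +
     Jphi Rad phi (lin 1 f 1 h) - (1 / 2 * Dform Rad a1 a2 b f f + Jphi Rad phi f) -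
     (Dform Rad a1 a2 b f h + Kphi Rad dphi f h)) with
     (1/2 * Dform Rad a1 a2 b h h + (Jphi Rad phi (lin 1 f 1 h) - Jphi Rad phi f - Kphi Rad dphi f h)) by field.
  rewrite EJ. eapply Rle_trans. apply Rabs_triang. rewrite Rabs_mult. rewrite (Rabs_right (1/2)) by lra.
  assert (1/2 * Rabs (Dform Rad a1 a2 b h h) <= 1/2 * (cD Rad a1 a2 b * Nf Rad h)) by lra.
  unfold Rdiv in *. lra.
Qed.

Lemma Lf_lin Rad a1 a2 b phi dphi K f c1 h1 c2 h2 : 0 < Rad -> phiOK phi dphi K -> C1_0 Rad f -> C1_0 Rad h1 -> C1_0 Rad h2 ->
  Lf Rad a1 a2 b dphi f (lin c1 h1 c2 h2) = c1 * Lf Rad a1 a2 b dphi f h1 + c2 * Lf Rad a1 a2 b dphi f h2.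
Proof.
  intros HR Hp Hf H1 H2. unfold Lf. rewrite Dform_lin_r; auto.
  assert (Kphi Rad dphi f (lin c1 h1 c2 h2) = c1 * Kphi Rad dphi f h1 + c2 * Kphi Rad dphi f h2).
  { unfold Kphi. rewrite <- RInt_lin. apply RInt_ext. intros. unfold lin. rring.
    apply ex_K; auto; eapply dphi_cont; eauto. apply ex_K; auto; eapply dphi_cont; eauto. }
  rewrite H. ring.
Qed.

Lemma Nf_sum Rad f g : 0 < Rad -> C1_0 Rad f -> C1_0 Rad g -> Nf Rad (lin 1 f 1 g) <= 2 * Nf Rad f + 2 * Nf Rad g.
Proof.
  intros. unfold Nf. rewrite Dform_quad; auto.
  pose proof (Dform_nonneg Rad 1 1 0 (lin 1 f (-1) g) H ltac:(apply C1_lin; auto) ltac:(lra) ltac:(lra) ltac:(lra)).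
  rewrite Dform_quad in H2; auto. lra.
Qed.

Lemma Nf_diff Rad f g : 0 < Rad -> C1_0 Rad f -> C1_0 Rad g ->
  Nf Rad f - Nf Rad g = Dform Rad 1 1 0 (lin 1 f (-1) g) (lin 1 f 1 g).
Proof.
  intros. unfold Nf. rewrite Dform_lin_l; auto. rewrite !Dform_lin_r; auto.
  rewrite (Dform_sym Rad 1 1 0 g f). ring. apply C1_lin; auto.
Qed.

Lemma Nf_scal Rad c f : 0 < Rad -> C1_0 Rad f -> Nf Rad (lin c f 0 f) = c * c * Nf Rad f.
Proof.
  intros. unfold Nf. rewrite Dform_lin_l; auto. rewrite !Dform_lin_r; auto. ring. apply C1_lin; auto.
Qed.

Definition seqlim (u : nat -> R) : R := real (Lim_seq u).

Lemma seqlim_eq u (l : R) : is_lim_seq u l -> seqlim u = l.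
Proof. intros H. unfold seqlim. rewrite (is_lim_seq_unique u l H). reflexivity. Qed.

Definition cauchy (u : nat -> R) := forall eps, 0 < eps -> exists N, forall n m, (N <= n)%nat -> (N <= m)%nat -> Rabs (u n - u m) < eps.

Lemma cauchy_lim u : cauchy u -> is_lim_seq u (seqlim u).
Proof.
  intros H. assert (Hc : ex_lim_seq_cauchy u).
  { intros eps. destruct (H eps (cond_pos eps)) as [N HN]. exists N. auto. }
  apply ex_lim_seq_cauchy_corr in Hc. destruct Hc as [l Hl].
  rewrite (seqlim_eq u l Hl). auto.
Qed.

Lemma diff_lin (f g : R -> R) : (fun r => f r - g r) = lin 1 f (-1) g.
Proof. apply functional_extensionality. intros; unfold lin; ring. Qed.
Lemma Hadd_lin U H k : Hadd U H k = lin 1 (U k) 1 (H k).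
Proof. apply functional_extensionality. intros; unfold lin, Hadd; ring. Qed.
Lemma Hscal_lin c H k : Hscal c H k = lin c (H k) 0 (H k).
Proof. apply functional_extensionality. intros; unfold lin, Hscal; ring. Qed.

Definition dd Rad (U : Hseq) k m := Nf Rad (lin 1 (U k) (-1) (U m)).

Lemma inH_C1 Rad U k : inH Rad U -> C1_0 Rad (U k).
Proof. intros [H _]. auto. Qed.

Lemma inH_dd Rad U : 0 < Rad -> inH Rad U -> forall eps, 0 < eps -> exists N, forall k m, (N <= k)%nat -> (N <= m)%nat -> dd Rad U k m < eps.
Proof.
  intros HR [HC Hc] eps He. destruct (Hc eps He) as [N HN]. exists N. intros k m Hk Hm.
  specialize (HN k m Hk Hm). rewrite Hnorm2_Nf, diff_lin in HN; auto.
Qed.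

Lemma dd_nonneg Rad U k m : 0 < Rad -> inH Rad U -> 0 <= dd Rad U k m.
Proof. intros. apply Nf_nonneg; auto. apply C1_lin; auto; apply inH_C1; auto. Qed.

Lemma finite_bound (u : nat -> R) N0 : exists M, forall k, (k < N0)%nat -> u k <= M.
Proof.
  induction N0. exists 0. intros; lia.
  destruct IHN0 as [M HM]. exists (Rmax M (u N0)). intros k Hk.
  destruct (Nat.eq_dec k N0). subst. apply Rmax_r. eapply Rle_trans. apply HM. lia. apply Rmax_l.
Qed.

Lemma inH_bound Rad U : 0 < Rad -> inH Rad U -> exists M, 0 <= M /\ forall k, Nf Rad (U k) <= M.
Proof.
  intros HR HU. destruct (inH_dd Rad U HR HU 1 ltac:(lra)) as [N0 HN].
  destruct (finite_bound (fun k => Nf Rad (U k)) N0) as [M1 HM1].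
  exists (Rmax 0 (Rmax M1 (2 * 1 + 2 * Nf Rad (U N0)))). split. apply Rmax_l.
  intros k. destruct (lt_dec k N0).
  - eapply Rle_trans. apply HM1; auto. eapply Rle_trans. apply Rmax_l. apply Rmax_r.
  - assert (E : U k = lin 1 (lin 1 (U k) (-1) (U N0)) 1 (U N0)).
    { apply functional_extensionality. intros; unfold lin; ring. }
    rewrite E. eapply Rle_trans. apply Nf_sum; auto. apply C1_lin; auto; apply inH_C1; auto. apply inH_C1; auto.
    eapply Rle_trans. 2: apply Rmax_r. eapply Rle_trans. 2: apply Rmax_r.
    specialize (HN k N0 ltac:(lia) ltac:(lia)). unfold dd in HN. lra.
Qed.

Lemma sqrt_lt_sq x y : 0 <= x -> 0 < y -> x < y * y -> sqrt x < y.
Proof. intros. rewrite <- (sqrt_square y) by lra. apply sqrt_lt_1_alt. lra. Qed.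

Lemma cauchy_ctrl Rad U H (u : nat -> R) : 0 < Rad -> inH Rad U -> inH Rad H ->
  (exists C, 0 <= C /\ forall k m, Rabs (u k - u m) <= C * (sqrt (dd Rad U k m) + dd Rad U k m + sqrt (dd Rad H k m) + dd Rad H k m)) ->
  cauchy u.
Proof.
  intros HR HU HH [C [HC Hb]] eps He.
  set (t := eps / (4 * (C + 1))).
  assert (Ht : 0 < t) by (unfold t; apply Rdiv_lt_0_compat; lra).
  set (dl := Rmin 1 (t * t)).
  assert (Hdl : 0 < dl) by (unfold dl; apply Rmin_pos; nra).
  destruct (inH_dd Rad U HR HU dl Hdl) as [N1 HN1].
  destruct (inH_dd Rad H HR HH dl Hdl) as [N2 HN2].
  exists (max N1 N2). intros n m Hn Hm.
  assert (Hs : forall d, 0 <= d -> d < dl -> sqrt d + d <= 2 * t).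
  { intros d Hd0 Hd. unfold dl in Hd. assert (d < 1) by (pose proof (Rmin_l 1 (t*t)); lra).
    assert (d < t * t) by (pose proof (Rmin_r 1 (t*t)); lra).
    assert (sqrt d < t) by (apply sqrt_lt_sq; auto).
    assert (d <= sqrt d).
    { rewrite <- (sqrt_square d) at 1 by lra. apply sqrt_le_1_alt. nra. }
    lra. }
  pose proof (Hs _ (dd_nonneg Rad U n m HR HU) (HN1 n m ltac:(lia) ltac:(lia))).
  pose proof (Hs _ (dd_nonneg Rad H n m HR HH) (HN2 n m ltac:(lia) ltac:(lia))).
  eapply Rle_lt_trans. apply Hb.
  apply Rle_lt_trans with (C * (4 * t)). apply Rmult_le_compat_l; lra.
  unfold t. apply Rlt_le_trans with ((C+1) * (4 * (eps / (4 * (C + 1))))).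
  assert (0 < 4 * (eps / (4 * (C + 1)))) by (apply Rmult_lt_0_compat; [lra| apply Rdiv_lt_0_compat; lra]). nra.
  right; field; lra.
Qed.

Definition nl Rad U := seqlim (fun k => Nf Rad (U k)).
Definition EF Rad a1 a2 b phi U := seqlim (fun k => Ff Rad a1 a2 b phi (U k)).
Definition LF Rad a1 a2 b dphi U H := seqlim (fun k => Lf Rad a1 a2 b dphi (U k) (H k)).

Lemma c1_pos Rad a1 a2 b K : 0 < Rad -> 0 <= K -> 0 <= cc1 Rad a1 a2 b K.
Proof. intros. unfold cc1. pose proof (cD_pos Rad a1 a2 b H). assert (0 <= K * Rad * Rad) by (apply Rmult_le_pos; [apply Rmult_le_pos|]; lra). lra. Qed.
Lemma c3_pos Rad a1 a2 b K : 0 < Rad -> 0 <= K -> 0 <= cc3 Rad a1 a2 b K.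
Proof. intros. unfold cc3. pose proof (cD_pos Rad a1 a2 b H). assert (0 <= K * Rad * Rad) by (apply Rmult_le_pos; [apply Rmult_le_pos|]; lra). lra. Qed.

Lemma sqrt_dd_nn Rad U k m : 0 <= sqrt (dd Rad U k m).
Proof. apply sqrt_pos. Qed.

Lemma N_conv Rad U : 0 < Rad -> inH Rad U -> is_lim_seq (fun k => Nf Rad (U k)) (nl Rad U).
Proof.
  intros HR HU. apply cauchy_lim. apply (cauchy_ctrl Rad U U); auto.
  destruct (inH_bound Rad U HR HU) as [M [HM HMb]].
  exists (sqrt (4 * M)). split. apply sqrt_pos. intros k m.
  pose proof (inH_C1 Rad U k HU). pose proof (inH_C1 Rad U m HU).
  rewrite Nf_diff; auto.
  eapply Rle_trans. apply Dform_bound; auto; apply C1_lin; auto.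
  replace (cD Rad 1 1 0) with 1 by (unfold cD; rewrite Rminus_eq_0, Rabs_R0, Rabs_R1; ring).
  fold (dd Rad U k m).
  assert (sqrt (Nf Rad (lin 1 (U k) 1 (U m))) <= sqrt (4 * M)).
  { apply sqrt_le_1_alt. eapply Rle_trans. apply Nf_sum; auto. pose proof (HMb k); pose proof (HMb m). lra. }
  pose proof (sqrt_dd_nn Rad U k m). pose proof (dd_nonneg Rad U k m HR HU). pose proof (sqrt_pos (4 * M)).
  nra.
Qed.

Lemma nl_nonneg Rad U : 0 < Rad -> inH Rad U -> 0 <= nl Rad U.
Proof.
  intros HR HU. pose proof (N_conv Rad U HR HU).
  assert (Rbar_le 0 (nl Rad U)). apply (is_lim_seq_le (fun _ => 0) (fun k => Nf Rad (U k))); auto.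
  intros; apply Nf_nonneg; auto; apply inH_C1; auto. apply is_lim_seq_const. auto.
Qed.

Lemma Hnorm_nl Rad U : 0 < Rad -> inH Rad U -> Hnorm Rad U = sqrt (nl Rad U).
Proof.
  intros. unfold Hnorm, nl, seqlim. f_equal. f_equal. apply Lim_seq_ext. intros; apply Hnorm2_Nf; auto.
Qed.

Lemma F_conv Rad a1 a2 b phi dphi K U : 0 < Rad -> phiOK phi dphi K -> inH Rad U ->
  is_lim_seq (fun k => Ff Rad a1 a2 b phi (U k)) (EF Rad a1 a2 b phi U).
Proof.
  intros HR Hp HU. apply cauchy_lim. apply (cauchy_ctrl Rad U U); auto.
  destruct (inH_bound Rad U HR HU) as [M [HM HMb]]. pose proof (ph_K _ _ _ Hp).
  pose proof (c1_pos Rad a1 a2 b K HR H). pose proof (c3_pos Rad a1 a2 b K HR H).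
  exists (cc3 Rad a1 a2 b K + cc1 Rad a1 a2 b K * sqrt M). split. pose proof (sqrt_pos M). nra.
  intros k m.
  pose proof (inH_C1 Rad U k HU). pose proof (inH_C1 Rad U m HU).
  assert (Hd : C1_0 Rad (lin 1 (U k) (-1) (U m))) by (apply C1_lin; auto).
  assert (E : U k = lin 1 (U m) 1 (lin 1 (U k) (-1) (U m))).
  { apply functional_extensionality. intros; unfold lin; ring. }
  pose proof (LE3 Rad a1 a2 b phi dphi K (U m) _ HR Hp H3 Hd) as B3. rewrite <- E in B3.
  pose proof (LE1 Rad a1 a2 b phi dphi K (U m) _ HR Hp H3 Hd) as B1. fold (dd Rad U k m) in B1, B3.
  replace (Ff Rad a1 a2 b phi (U k) - Ff Rad a1 a2 b phi (U m)) with
    ((Ff Rad a1 a2 b phi (U k) - Ff Rad a1 a2 b phi (U m) - Lf Rad a1 a2 b dphi (U m) (lin 1 (U k) (-1) (U m))) +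
      Lf Rad a1 a2 b dphi (U m) (lin 1 (U k) (-1) (U m))) by ring.
  eapply Rle_trans. apply Rabs_triang.
  assert (sqrt (Nf Rad (U m)) <= sqrt M) by (apply sqrt_le_1_alt; auto).
  pose proof (sqrt_dd_nn Rad U k m). pose proof (dd_nonneg Rad U k m HR HU). pose proof (sqrt_pos M).
  pose proof (sqrt_pos (Nf Rad (U m))).
  assert (cc1 Rad a1 a2 b K * sqrt (Nf Rad (U m)) * sqrt (dd Rad U k m) <= cc1 Rad a1 a2 b K * sqrt M * sqrt (dd Rad U k m)).
  { apply Rmult_le_compat_r; auto. apply Rmult_le_compat_l; auto. }
  set (c1' := cc1 Rad a1 a2 b K) in *. set (c3' := cc3 Rad a1 a2 b K) in *.
  set (s := sqrt (dd Rad U k m)) in *. set (d := dd Rad U k m) in *.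
  assert (0 <= c3' * s) by (apply Rmult_le_pos; auto).
  assert (0 <= c1' * sqrt M * d) by (apply Rmult_le_pos; [apply Rmult_le_pos|]; auto).
  assert (0 <= c1' * sqrt M * s) by (apply Rmult_le_pos; [apply Rmult_le_pos|]; auto).
  assert (0 <= c3' * d) by (apply Rmult_le_pos; auto).
  replace ((c3' + c1' * sqrt M) * (s + d + s + d)) with (c3' * d + c1' * sqrt M * s + (2 * (c3' * s) + c3' * d + c1' * sqrt M * s + 2 * (c1' * sqrt M * d))) by ring.
  lra.
Qed.

Lemma L_conv Rad a1 a2 b phi dphi K U H : 0 < Rad -> phiOK phi dphi K -> inH Rad U -> inH Rad H ->
  is_lim_seq (fun k => Lf Rad a1 a2 b dphi (U k) (H k)) (LF Rad a1 a2 b dphi U H).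
Proof.
  intros HR Hp HU HH. apply cauchy_lim. apply (cauchy_ctrl Rad U H); auto.
  destruct (inH_bound Rad U HR HU) as [M [HM HMb]]. destruct (inH_bound Rad H HR HH) as [M' [HM' HMb']].
  pose proof (ph_K _ _ _ Hp). pose proof (c1_pos Rad a1 a2 b K HR H0).
  exists (cc1 Rad a1 a2 b K * (sqrt M + sqrt M')). split. pose proof (sqrt_pos M). pose proof (sqrt_pos M'). nra.
  intros k m.
  pose proof (inH_C1 Rad U k HU). pose proof (inH_C1 Rad U m HU).
  pose proof (inH_C1 Rad H k HH). pose proof (inH_C1 Rad H m HH).
  assert (Hd : C1_0 Rad (lin 1 (H k) (-1) (H m))) by (apply C1_lin; auto).
  pose proof (Lf_lin Rad a1 a2 b phi dphi K (U k) 1 (H k) (-1) (H m) HR Hp H2 H4 H5) as EL.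
  pose proof (LE1 Rad a1 a2 b phi dphi K (U k) _ HR Hp H2 Hd) as B1. fold (dd Rad H k m) in B1.
  pose proof (LE2 Rad a1 a2 b phi dphi K (U k) (U m) (H m) HR Hp H2 H3 H5) as B2. fold (dd Rad U k m) in B2.
  replace (Lf Rad a1 a2 b dphi (U k) (H k) - Lf Rad a1 a2 b dphi (U m) (H m)) with
    (Lf Rad a1 a2 b dphi (U k) (lin 1 (H k) (-1) (H m)) + (Lf Rad a1 a2 b dphi (U k) (H m) - Lf Rad a1 a2 b dphi (U m) (H m))) by (rewrite EL; ring).
  eapply Rle_trans. apply Rabs_triang.
  assert (sqrt (Nf Rad (U k)) <= sqrt M) by (apply sqrt_le_1_alt; auto).
  assert (sqrt (Nf Rad (H m)) <= sqrt M') by (apply sqrt_le_1_alt; auto).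
  pose proof (sqrt_dd_nn Rad U k m). pose proof (dd_nonneg Rad U k m HR HU).
  pose proof (sqrt_dd_nn Rad H k m). pose proof (dd_nonneg Rad H k m HR HH).
  pose proof (sqrt_pos M). pose proof (sqrt_pos M'). pose proof (sqrt_pos (Nf Rad (U k))). pose proof (sqrt_pos (Nf Rad (H m))).
  set (c := cc1 Rad a1 a2 b K) in *.
  assert (c * sqrt (Nf Rad (U k)) * sqrt (dd Rad H k m) <= c * sqrt M * sqrt (dd Rad H k m)).
  { apply Rmult_le_compat_r; auto. apply Rmult_le_compat_l; auto. }
  assert (c * sqrt (dd Rad U k m) * sqrt (Nf Rad (H m)) <= c * sqrt (dd Rad U k m) * sqrt M').
  { apply Rmult_le_compat_l; auto. apply Rmult_le_pos; auto. }
  set (sU := sqrt (dd Rad U k m)) in *. set (dU := dd Rad U k m) in *.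
  set (sH := sqrt (dd Rad H k m)) in *. set (dH := dd Rad H k m) in *.
  set (m1 := sqrt M) in *. set (m2 := sqrt M') in *.
  assert (0 <= c * m1 * sU) by (apply Rmult_le_pos; [apply Rmult_le_pos|]; auto).
  assert (0 <= c * m1 * dU) by (apply Rmult_le_pos; [apply Rmult_le_pos|]; auto).
  assert (0 <= c * m1 * dH) by (apply Rmult_le_pos; [apply Rmult_le_pos|]; auto).
  assert (0 <= c * m2 * sH) by (apply Rmult_le_pos; [apply Rmult_le_pos|]; auto).
  assert (0 <= c * m2 * dU) by (apply Rmult_le_pos; [apply Rmult_le_pos|]; auto).
  assert (0 <= c * m2 * dH) by (apply Rmult_le_pos; [apply Rmult_le_pos|]; auto).
  replace (c * (m1 + m2) * (sU + dU + sH + dH)) with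
    (c * m1 * sH + c * sU * m2 + (c * m1 * sU + c * m1 * dU + c * m1 * dH + c * m2 * sH + c * m2 * dU + c * m2 * dH)) by ring.
  lra.
Qed.

Lemma inH_add Rad U H : 0 < Rad -> inH Rad U -> inH Rad H -> inH Rad (Hadd U H).
Proof.
  intros HR HU HH. split.
  - intros k. rewrite Hadd_lin. apply C1_lin; auto; apply inH_C1; auto.
  - intros eps He. destruct (inH_dd Rad U HR HU (eps/4) ltac:(lra)) as [N1 HN1].
    destruct (inH_dd Rad H HR HH (eps/4) ltac:(lra)) as [N2 HN2].
    exists (max N1 N2). intros k m Hk Hm.
    assert (E : (fun r => Hadd U H k r - Hadd U H m r) = lin 1 (lin 1 (U k) (-1) (U m)) 1 (lin 1 (H k) (-1) (H m))).
    { apply functional_extensionality. intros; unfold lin, Hadd; ring. }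
    pose proof (inH_C1 Rad U k HU). pose proof (inH_C1 Rad U m HU).
    pose proof (inH_C1 Rad H k HH). pose proof (inH_C1 Rad H m HH).
    rewrite E, Hnorm2_Nf by auto.
    eapply Rle_lt_trans. apply Nf_sum; auto; apply C1_lin; auto.
    specialize (HN1 k m ltac:(lia) ltac:(lia)). specialize (HN2 k m ltac:(lia) ltac:(lia)).
    unfold dd in *. lra.
Qed.

Lemma inH_scal Rad c H : 0 < Rad -> inH Rad H -> inH Rad (Hscal c H).
Proof.
  intros HR HH. split.
  - intros k. rewrite Hscal_lin. apply C1_lin; auto; apply inH_C1; auto.
  - intros eps He. destruct (inH_dd Rad H HR HH (eps/(c*c+1))) as [N1 HN1].
    apply Rdiv_lt_0_compat; nra.
    exists N1. intros k m Hk Hm.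
    assert (E : (fun r => Hscal c H k r - Hscal c H m r) = lin c (lin 1 (H k) (-1) (H m)) 0 (lin 1 (H k) (-1) (H m))).
    { apply functional_extensionality. intros; unfold lin, Hscal; ring. }
    pose proof (inH_C1 Rad H k HH). pose proof (inH_C1 Rad H m HH).
    rewrite E, Hnorm2_Nf by auto. rewrite Nf_scal; auto. 2: apply C1_lin; auto.
    specialize (HN1 k m Hk Hm). unfold dd in *.
    pose proof (dd_nonneg Rad H k m HR HH). unfold dd in H2.
    apply Rle_lt_trans with (c * c * (eps / (c * c + 1))). apply Rmult_le_compat_l. nra. lra.
    apply Rlt_le_trans with ((c*c+1) * (eps / (c*c+1))).
    assert (0 < eps / (c*c+1)) by (apply Rdiv_lt_0_compat; nra). nra. right; field; nra.
Qed.

Lemma nl_scal Rad c H : 0 < Rad -> inH Rad H -> nl Rad (Hscal c H) = c * c * nl Rad H.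
Proof.
  intros HR HH. unfold nl at 1. apply seqlim_eq.
  apply is_lim_seq_ext with (fun k => (c * c) * Nf Rad (H k)).
  intros k. rewrite Hscal_lin, Nf_scal; auto. apply inH_C1; auto.
  apply (is_lim_seq_scal_l _ (c*c) (nl Rad H)). apply N_conv; auto.
Qed.

Lemma Hnorm_scal Rad c H : 0 < Rad -> inH Rad H -> Hnorm Rad (Hscal c H) = Rabs c * Hnorm Rad H.
Proof.
  intros HR HH. rewrite !Hnorm_nl by (auto; apply inH_scal; auto). rewrite nl_scal by auto.
  rewrite sqrt_mult. rewrite <- Rsqr_def, sqrt_Rsqr_abs. auto. apply Rle_0_sqr. apply nl_nonneg; auto.
Qed.

Lemma Fderiv_EF Rad a1 a2 b phi dphi K U : 0 < Rad -> phiOK phi dphi K -> inH Rad U ->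
  is_Fderiv Rad (EF Rad a1 a2 b phi) U (LF Rad a1 a2 b dphi U).
Proof.
  intros HR Hp HU. pose proof (ph_K _ _ _ Hp) as HK.
  destruct (inH_bound Rad U HR HU) as [M [HM HMb]].
  split; [|split; [|split]].
  - intros H1 H2 HH1 HH2. unfold LF at 1. apply seqlim_eq.
    apply is_lim_seq_ext with (fun k => Lf Rad a1 a2 b dphi (U k) (H1 k) + Lf Rad a1 a2 b dphi (U k) (H2 k)).
    intros k. rewrite Hadd_lin. rewrite (Lf_lin Rad a1 a2 b phi dphi K); auto; try apply inH_C1; auto. ring.
    apply is_lim_seq_plus'; apply (L_conv Rad a1 a2 b phi dphi K); auto.
  - intros c H HH. unfold LF at 1. apply seqlim_eq.
    apply is_lim_seq_ext with (fun k => c * Lf Rad a1 a2 b dphi (U k) (H k)).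
    intros k. rewrite Hscal_lin. rewrite (Lf_lin Rad a1 a2 b phi dphi K); auto; try apply inH_C1; auto. ring.
    apply (is_lim_seq_scal_l _ c (LF Rad a1 a2 b dphi U H)). apply (L_conv Rad a1 a2 b phi dphi K); auto.
  - set (C := cc1 Rad a1 a2 b K * sqrt M). exists C. intros H HH.
    pose proof (c1_pos Rad a1 a2 b K HR HK). pose proof (sqrt_pos M).
    assert (HC : 0 <= C) by (unfold C; nra).
    assert (Hsq : Rsqr (LF Rad a1 a2 b dphi U H) <= Rsqr C * nl Rad H).
    { assert (Hl := is_lim_seq_mult' _ _ _ _ (L_conv Rad a1 a2 b phi dphi K U H HR Hp HU HH) (L_conv Rad a1 a2 b phi dphi K U H HR Hp HU HH)).
      assert (Hr := is_lim_seq_scal_l _ (Rsqr C) _ (N_conv Rad H HR HH)).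
      assert (Hpt : forall k, Lf Rad a1 a2 b dphi (U k) (H k) * Lf Rad a1 a2 b dphi (U k) (H k) <= Rsqr C * Nf Rad (H k)).
      { intros k. pose proof (LE1 Rad a1 a2 b phi dphi K (U k) (H k) HR Hp (inH_C1 Rad U k HU) (inH_C1 Rad H k HH)).
      pose proof (sqrt_pos (Nf Rad (U k))). pose proof (sqrt_pos (Nf Rad (H k))).
      assert (sqrt (Nf Rad (U k)) <= sqrt M) by (apply sqrt_le_1_alt; auto).
      assert (Hb : Rabs (Lf Rad a1 a2 b dphi (U k) (H k)) <= C * sqrt (Nf Rad (H k))).
      { eapply Rle_trans. exact H2. unfold C. apply Rmult_le_compat_r; auto. apply Rmult_le_compat_l; auto. }
      rewrite <- (sqrt_sqrt (Nf Rad (H k))) by (apply Nf_nonneg; auto; apply inH_C1; auto).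
      pose proof (Rabs_pos (Lf Rad a1 a2 b dphi (U k) (H k))).
      pose proof (Rsqr_abs (Lf Rad a1 a2 b dphi (U k) (H k))). unfold Rsqr in *.
      assert (Rabs (Lf Rad a1 a2 b dphi (U k) (H k)) * Rabs (Lf Rad a1 a2 b dphi (U k) (H k)) <= (C * sqrt (Nf Rad (H k))) * (C * sqrt (Nf Rad (H k)))).
      { apply Rmult_le_compat; auto. }
      nra. }
      pose proof (is_lim_seq_le _ _ _ _ Hpt Hl Hr) as Hle. simpl in Hle. unfold Rsqr; exact Hle. }
    rewrite Hnorm_nl by auto. pose proof (nl_nonneg Rad H HR HH).
    rewrite <- (sqrt_Rsqr C) by auto. rewrite <- sqrt_mult by (auto; apply Rle_0_sqr).
    rewrite <- sqrt_Rsqr_abs. apply sqrt_le_1_alt. auto.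
  - intros eps He. pose proof (c3_pos Rad a1 a2 b K HR HK) as H3.
    set (c := cc3 Rad a1 a2 b K) in *.
    exists (eps / (c + 1)). split. apply Rdiv_lt_0_compat; lra.
    intros H HH Hn.
    assert (HUH : inH Rad (Hadd U H)) by (apply inH_add; auto).
    assert (Hx := is_lim_seq_minus' _ _ _ _ (is_lim_seq_minus' _ _ _ _ (F_conv Rad a1 a2 b phi dphi K _ HR Hp HUH) (F_conv Rad a1 a2 b phi dphi K _ HR Hp HU)) (L_conv Rad a1 a2 b phi dphi K U H HR Hp HU HH)).
    apply is_lim_seq_abs in Hx.
    assert (Hr := is_lim_seq_scal_l _ c _ (N_conv Rad H HR HH)).
    assert (Hpt : forall k, Rabs (Ff Rad a1 a2 b phi (Hadd U H k) - Ff Rad a1 a2 b phi (U k) - Lf Rad a1 a2 b dphi (U k) (H k)) <= c * Nf Rad (H k)).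
    { intros k. rewrite Hadd_lin. apply LE3; auto; apply inH_C1; auto. }
    assert (Hle := is_lim_seq_le _ _ _ _ Hpt Hx Hr).
    simpl in Hle.
    rewrite Hnorm_nl in Hn |- * by auto. pose proof (nl_nonneg Rad H HR HH).
    set (h := sqrt (nl Rad H)) in *. assert (0 <= h) by apply sqrt_pos.
    assert (nl Rad H = h * h) by (unfold h; rewrite sqrt_sqrt; auto).
    assert (nl Rad H = h * h) by (unfold h; symmetry; apply sqrt_sqrt; auto).
    eapply Rle_trans. exact Hle.
    assert (c * h <= eps).
    { apply Rle_trans with ((c+1) * (eps / (c+1))). assert (0 <= eps / (c+1)) by (apply Rlt_le, Rdiv_lt_0_compat; lra). nra.
      right; field; lra. }
    nra.
Qed.

Lemma lip_of_der (g dg : R -> R) K : (forall x, is_derive g x (dg x)) -> (forall x, Rabs (dg x) <= K) ->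
  forall a b, Rabs (g a - g b) <= K * Rabs (a - b).
Proof.
  intros Hd Hb a b. destruct (MVT_gen g b a dg) as [c [Hc Ec]].
  - intros; apply Hd.
  - intros; apply cont_pt. apply (@ex_derive_continuous R_AbsRing R_NormedModule). eexists; apply Hd.
  - rewrite Ec, Rabs_mult. apply Rmult_le_compat_r. apply Rabs_pos. apply Hb.
Qed.

Definition phiI (al : R) s := / al ^ 2 * ln (1 + al * s ^ 2).
Definition dphiI (al : R) s := 2 * s / (al * (1 + al * s ^ 2)).
Definition phiG (al : R) s := / al * (s ^ 2 / (1 + al * s ^ 2)).
Definition dphiG (al : R) s := 2 * s / (al * (1 + al * s ^ 2) ^ 2).

Lemma pos1 al s : 0 < al -> 0 < 1 + al * s ^ 2.
Proof. intros. assert (0 <= s ^ 2) by (rewrite <- Rsqr_pow2; apply Rle_0_sqr). nra. Qed.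

Lemma phiI_OK al : 0 < al -> phiOK (phiI al) (dphiI al) (2 / al).
Proof.
  intros Ha. constructor.
  - intros s. unfold phiI, dphiI. pose proof (pos1 al s Ha). auto_derive. { simpl in H; lra. } simpl in *. field. repeat split; nra.
  - unfold dphiI. unfold Rdiv. ring.
  - apply lip_of_der with (fun s => 2 * (1 - al * s ^ 2) / (al * (1 + al * s ^ 2) ^ 2)).
    + intros s. unfold dphiI. pose proof (pos1 al s Ha). auto_derive. { apply Rgt_not_eq. simpl in H. apply Rmult_lt_0_compat; lra. } simpl in *. field. repeat split; nra.
    + intros s. pose proof (pos1 al s Ha). assert (0 <= al * s ^ 2) by (pose proof (pos1 al s Ha); rewrite <- Rsqr_pow2; apply Rmult_le_pos; [lra|apply Rle_0_sqr]).
      set (u := al * s ^ 2) in *.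
      replace (2 * (1 - u) / (al * (1 + u) ^ 2)) with ((2 / al) * ((1 - u) / (1 + u) ^ 2)) by (field; split; lra).
      rewrite Rabs_mult, (Rabs_right (2 / al)) by (apply Rle_ge, Rlt_le, Rdiv_lt_0_compat; lra).
      rewrite <- (Rmult_1_r (2 / al)) at 2. apply Rmult_le_compat_l. apply Rlt_le, Rdiv_lt_0_compat; lra.
      unfold Rdiv. rewrite Rabs_mult, Rabs_inv, (Rabs_right ((1+u)^2)) by (apply Rle_ge; nra).
      apply Rmult_le_reg_r with ((1 + u) ^ 2). nra. rewrite Rmult_assoc, Rinv_l by nra.
      unfold Rabs; destruct Rcase_abs; nra.
  - apply Rlt_le, Rdiv_lt_0_compat; lra.
Qed.

Lemma phiG_OK al : 0 < al -> phiOK (phiG al) (dphiG al) (6 / al).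
Proof.
  intros Ha. constructor.
  - intros s. unfold phiG, dphiG. pose proof (pos1 al s Ha). auto_derive. { simpl in H; lra. } simpl in *. field. repeat split; nra.
  - unfold dphiG. unfold Rdiv. ring.
  - apply lip_of_der with (fun s => 2 * (1 - 3 * (al * s ^ 2)) / (al * (1 + al * s ^ 2) ^ 3)).
    + intros s. unfold dphiG. pose proof (pos1 al s Ha). auto_derive. { apply Rgt_not_eq. simpl in H. apply Rmult_lt_0_compat; try lra. apply Rmult_lt_0_compat; nra. } simpl in *. field. repeat split; nra.
    + intros s. pose proof (pos1 al s Ha). assert (0 <= al * s ^ 2) by (pose proof (pos1 al s Ha); rewrite <- Rsqr_pow2; apply Rmult_le_pos; [lra|apply Rle_0_sqr]).
      set (u := al * s ^ 2) in *.
      replace (2 * (1 - 3 * u) / (al * (1 + u) ^ 3)) with ((2 / al) * ((1 - 3 * u) / (1 + u) ^ 3)) by (field; split; lra).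
      rewrite Rabs_mult, (Rabs_right (2 / al)) by (apply Rle_ge, Rlt_le, Rdiv_lt_0_compat; lra).
      replace (6 / al) with (2 / al * 3) by (field; lra).
      apply Rmult_le_compat_l. apply Rlt_le, Rdiv_lt_0_compat; lra.
      unfold Rdiv. rewrite Rabs_mult, Rabs_inv, (Rabs_right ((1+u)^3)) by (apply Rle_ge; nra).
      apply Rmult_le_reg_r with ((1 + u) ^ 3). nra. rewrite Rmult_assoc, Rinv_l by nra.
      unfold Rabs; destruct Rcase_abs; nra.
  - apply Rlt_le, Rdiv_lt_0_compat; lra.
Qed.

Lemma Fderiv_unique Rad F U L1 L2 : 0 < Rad -> inH Rad U -> is_Fderiv Rad F U L1 -> is_Fderiv Rad F U L2 ->
  forall H, inH Rad H -> L1 H = L2 H.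
Proof.
  intros HR HU [_ [S1 [_ R1]]] [_ [S2 [_ R2]]] H HH.
  destruct (Req_dec (L1 H) (L2 H)) as [e|ne]; auto. exfalso.
  set (d := L1 H - L2 H). assert (Hd : 0 < Rabs d) by (apply Rabs_pos_lt; unfold d; lra).
  set (h := Hnorm Rad H). assert (Hh : 0 <= h) by apply sqrt_pos.
  destruct Hh as [Hh|Hh].
  - set (eps := Rabs d / (4 * h)). assert (He : 0 < eps) by (unfold eps; apply Rdiv_lt_0_compat; lra).
    destruct (R1 eps He) as [d1 [Hd1 B1]]. destruct (R2 eps He) as [d2 [Hd2 B2]].
    set (de := Rmin d1 d2). assert (Hde : 0 < de) by (apply Rmin_pos; auto).
    set (t := de / (2 * h)). assert (Ht : 0 < t) by (unfold t; apply Rdiv_lt_0_compat; lra).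
    assert (HH' : inH Rad (Hscal t H)) by (apply inH_scal; auto).
    assert (Hn : Hnorm Rad (Hscal t H) = de / 2).
    { rewrite Hnorm_scal by auto. rewrite Rabs_right by lra. fold h. unfold t. field. lra. }
    assert (Hn1 : Hnorm Rad (Hscal t H) < d1) by (rewrite Hn; pose proof (Rmin_l d1 d2); unfold de in *; lra).
    assert (Hn2 : Hnorm Rad (Hscal t H) < d2) by (rewrite Hn; pose proof (Rmin_r d1 d2); unfold de in *; lra).
    specialize (B1 _ HH' Hn1). specialize (B2 _ HH' Hn2).
    rewrite S1, Hn in B1 by auto. rewrite S2, Hn in B2 by auto.
    assert (Rabs (t * d) <= 2 * (eps * (de / 2))).
    { replace (t * d) with ((F (Hadd U (Hscal t H)) - F U - t * L2 H) - (F (Hadd U (Hscal t H)) - F U - t * L1 H)) by (unfold d; ring).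
      eapply Rle_trans. apply Rabs_triang. rewrite Rabs_Ropp. lra. }
    rewrite Rabs_mult, (Rabs_right t) in H0 by lra.
    unfold t, eps in H0.
    assert (de / (2 * h) * Rabs d = de * Rabs d / (2 * h)) by (field; lra).
    assert (2 * (Rabs d / (4 * h) * (de / 2)) = de * Rabs d / (4 * h)) by (field; lra).
    rewrite H1, H2 in H0.
    assert (de * Rabs d / (4 * h) < de * Rabs d / (2 * h)).
    { unfold Rdiv. apply Rmult_lt_compat_l. nra. apply Rinv_lt_contravar; nra. }
    lra.
  - destruct (R1 1 ltac:(lra)) as [d1 [Hd1 B1]]. destruct (R2 1 ltac:(lra)) as [d2 [Hd2 B2]].
    assert (Hz : Hnorm Rad H = 0) by (unfold h in Hh; lra).
    specialize (B1 H HH ltac:(lra)). specialize (B2 H HH ltac:(lra)).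
    rewrite Hz, Rmult_0_r in B1, B2.
    assert (Rabs d <= 0).
    { replace d with ((F (Hadd U H) - F U - L2 H) - (F (Hadd U H) - F U - L1 H)) by (unfold d; ring).
      eapply Rle_trans. apply Rabs_triang. rewrite Rabs_Ropp. lra. }
    lra.
Qed.

Lemma Fderiv_ext Rad F1 F2 U L : 0 < Rad -> inH Rad U -> (forall X, inH Rad X -> F1 X = F2 X) ->
  is_Fderiv Rad F1 U L -> is_Fderiv Rad F2 U L.
Proof.
  intros HR HU E [A [B [C R]]]. split; [auto|split; [auto|split; [auto|]]].
  intros eps He. destruct (R eps He) as [d [Hd HB]]. exists d; split; auto.
  intros H HH Hn. rewrite <- !E; auto. apply inH_add; auto.
Qed.

Definition bb al ka := -2 * (/ al - ka).

Lemma RInt_scal' (F : R -> R) c a b : ex_RInt F a b -> RInt (fun r => c * F r) a b = c * RInt F a b.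
Proof. intros. exact (RInt_scal F a b c H). Qed.

Lemma Ifun_Ff n al ka Rad f : 0 < Rad -> 0 < al -> C1_0 Rad f ->
  Ifun n al ka Rad f = Ff Rad 1 (IZR n ^ 2) (bb al ka) (phiI al) f.
Proof.
  intros HR Ha Hf. unfold Ifun, Ff, Jphi, Dform.
  rewrite (RInt_ext _ (fun r => 1 * Dint 1 (IZR n ^ 2) (bb al ka) f f r + 2 * (r * phiI al (f r))) 0 Rad).
  rewrite RInt_lin. lra. apply ex_RInt_Dint; auto.
  apply ex_J; auto. eapply phi_cont. apply phiI_OK; auto.
  intros x Hx. unfold Dint, phiI, bb. rring.
Qed.

Lemma gfun_Ff n al ka Rad f : 0 < Rad -> 0 < al -> C1_0 Rad f ->
  gfun n al ka Rad f = Ff Rad 1 (IZR n ^ 2) (bb al ka) (phiG al) f.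
Proof.
  intros HR Ha Hf. unfold gfun, Ff, Jphi, Dform.
  rewrite (RInt_ext _ (fun r => 1 * Dint 1 (IZR n ^ 2) (bb al ka) f f r + 2 * (r * phiG al (f r))) 0 Rad).
  rewrite RInt_lin. lra. apply ex_RInt_Dint; auto.
  apply ex_J; auto. eapply phi_cont. apply phiG_OK; auto.
  intros x Hx. unfold Dint, phiG, bb. rring.
Qed.

Lemma LI_FG n al ka Rad f : 0 < Rad -> 0 < al -> C1_0 Rad f ->
  Lf Rad 1 (IZR n ^ 2) (bb al ka) (dphiI al) f f = 2 * Ff Rad 1 (IZR n ^ 2) (bb al ka) (phiG al) f.
Proof.
  intros HR Ha Hf. unfold Lf, Ff, Kphi, Jphi.
  rewrite (RInt_ext (fun r => r * dphiI al (f r) * f r) (fun r => 2 * (r * phiG al (f r))) 0 Rad).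
  rewrite RInt_scal'. lra. apply ex_J; auto. eapply phi_cont. apply phiG_OK; auto.
  intros x Hx. unfold dphiI, phiG. pose proof (pos1 al (f x) Ha). change (@eq R (x * (2 * f x / (al * (1 + al * f x ^ 2))) * f x)
   (2 * (x * (/ al * (f x ^ 2 / (1 + al * f x ^ 2)))))). field. split; lra.
Qed.

Definition Tint al (f : R -> R) := fun r => r * (f r ^ 4 / (1 + al * f r ^ 2) ^ 2).

Lemma Tint_pt al f r : 0 < al -> r * dphiG al (f r) * f r - 2 * (r * phiG al (f r)) = -2 * Tint al f r.
Proof.
  intros Ha. unfold dphiG, phiG, Tint. pose proof (pos1 al (f r) Ha). field. split; lra.
Qed.

Lemma ex_Tint al Rad f : 0 < Rad -> 0 < al -> C1_0 Rad f -> ex_RInt (Tint al f) 0 Rad.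
Proof.
  intros HR Ha Hf.
  apply ex_RInt_ext with (fun r => (-1/2) * (1 * (r * dphiG al (f r) * f r) + (-2) * (r * phiG al (f r)))).
  intros x _. pose proof (Tint_pt al f x Ha). lra.
  apply (ex_RInt_scal (V:=R_NormedModule)). apply ex_RInt_lin. apply ex_K; auto. eapply dphi_cont; apply phiG_OK; auto.
  apply ex_J; auto. eapply phi_cont; apply phiG_OK; auto.
Qed.

Lemma LG_FG n al ka Rad f : 0 < Rad -> 0 < al -> C1_0 Rad f ->
  Lf Rad 1 (IZR n ^ 2) (bb al ka) (dphiG al) f f - 2 * Ff Rad 1 (IZR n ^ 2) (bb al ka) (phiG al) f =
  -2 * RInt (Tint al f) 0 Rad.
Proof.
  intros HR Ha Hf. unfold Lf, Ff, Kphi, Jphi.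
  assert (X1 : ex_RInt (fun r => r * dphiG al (f r) * f r) 0 Rad) by (apply ex_K; auto; eapply dphi_cont; apply phiG_OK; auto).
  assert (X2 : ex_RInt (fun r => r * phiG al (f r)) 0 Rad) by (apply ex_J; auto; eapply phi_cont; apply phiG_OK; auto).
  transitivity (1 * RInt (fun r => r * dphiG al (f r) * f r) 0 Rad + (-2) * RInt (fun r => r * phiG al (f r)) 0 Rad). lra.
  rewrite <- RInt_lin by auto. rewrite <- RInt_scal' by (apply ex_Tint; auto).
  apply RInt_ext. intros x _. pose proof (Tint_pt al f x Ha). lra.
Qed.

Lemma RInt_one Rad : RInt (fun _ => 1) 0 Rad = Rad.
Proof. rewrite RInt_const. unfold scal; simpl. unfold mult; simpl. ring. Qed.

Lemma W_bound al Rad f M dl : 0 < Rad -> 0 < al -> C1_0 Rad f -> 0 <= M -> (forall r, 0 <= r <= Rad -> f r * f r <= M) -> 0 < dl ->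
  Dform Rad 0 0 1 f f <= Rad * dl * Rad + (1 + al * M) ^ 2 / dl * RInt (Tint al f) 0 Rad.
Proof.
  intros HR Ha Hf HM Hb Hd.
  replace (Rad * dl * Rad) with ((Rad * dl) * RInt (fun _ => 1) 0 Rad) by (rewrite RInt_one; ring).
  rewrite <- RInt_lin. 2: apply (@ex_RInt_const R_CompleteNormedModule). 2: apply ex_Tint; auto.
  apply RInt_le. lra. apply ex_RInt_Dint; auto.
  apply ex_RInt_lin. apply (@ex_RInt_const R_CompleteNormedModule). apply ex_Tint; auto.
  intros r Hr. unfold Dint, Tint.
  specialize (Hb r ltac:(lra)).
  replace (0 * (r * Derive f r * Derive f r) + 0 * (f r * f r / r) + 1 * (r * f r * f r)) with (r * (f r * f r)) by ring.
  set (q := f r * f r) in *.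
  assert (Hq0 : 0 <= q) by apply Rle_0_sqr.
  replace (f r ^ 4) with (q * q) by (unfold q; ring).
  replace ((1 + al * f r ^ 2) ^ 2) with ((1 + al * q) * (1 + al * q)) by (unfold q; ring).
  set (u := 1 + al * q). assert (Hu : 1 <= u) by (unfold u; nra).
  assert (Hu2 : u <= 1 + al * M) by (unfold u; nra).
  assert (HA : u * u <= (1 + al * M) ^ 2) by (simpl; nra).
  set (A := (1 + al * M) ^ 2) in *.
  assert (h1 : q * dl <= dl * dl + q * q) by nra.
  assert (h2 : q <= dl + q * q / dl).
  { apply Rmult_le_reg_r with dl; auto. unfold Rdiv. rewrite Rmult_plus_distr_r, Rmult_assoc, Rinv_l by lra. lra. }
  assert (h3 : q * q <= A * (q * q / (u * u))).
  { apply Rmult_le_reg_r with (u * u). nra. unfold Rdiv.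
    replace (A * (q * q * / (u * u)) * (u * u)) with (A * (q * q)) by (field; lra). nra. }
  assert (h4 : q * q / dl <= A / dl * (q * q / (u * u))).
  { unfold Rdiv at 1 2. replace (A * / dl * (q * q / (u * u))) with ((A * (q * q / (u * u))) * / dl) by ring.
    apply Rmult_le_compat_r. apply Rlt_le, Rinv_0_lt_compat; auto. auto. }
  assert (h5 : q <= dl + A / dl * (q * q / (u * u))) by lra.
  assert (0 <= A / dl * (q * q / (u * u))).
  { apply Rmult_le_pos. apply Rdiv_le_0_compat; [unfold A; nra|lra]. apply Rdiv_le_0_compat; nra. }
  apply Rle_trans with (r * (dl + A / dl * (q * q / (u * u)))). apply Rmult_le_compat_l; lra.
  assert (r * (A / dl * (q * q / (u * u))) <= A / dl * (r * (q * q / (u * u)))) by (right; ring).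
  nra.
Qed.

Lemma n2_ge1 n : (1 <= Z.abs n)%Z -> 1 <= IZR n ^ 2.
Proof.
  intros H. destruct (Z_le_gt_dec 1 n) as [H1|H1].
  - apply IZR_le in H1. simpl. nra.
  - assert (n <= -1)%Z by lia. apply IZR_le in H0. simpl. nra.
Qed.

Lemma J_nonneg al Rad f : 0 < Rad -> 0 < al -> C1_0 Rad f -> 0 <= Jphi Rad (phiG al) f.
Proof.
  intros HR Ha Hf. unfold Jphi. apply RInt_ge_0. lra. apply ex_J; auto. eapply phi_cont; apply phiG_OK; auto.
  intros x Hx. unfold phiG. pose proof (pos1 al (f x) Ha).
  apply Rmult_le_pos. lra. apply Rmult_le_pos. apply Rlt_le, Rinv_0_lt_compat; auto.
  apply Rdiv_le_0_compat; [|lra]. rewrite <- Rsqr_pow2; apply Rle_0_sqr.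
Qed.

Lemma pt_ineq n al ka Rad f M dl : (1 <= Z.abs n)%Z -> 0 < al -> 0 < Rad -> C1_0 Rad f -> 0 <= M -> Nf Rad f <= M -> 0 < dl ->
  Nf Rad f <= 2 * Ff Rad 1 (IZR n ^ 2) (bb al ka) (phiG al) f + Rabs (bb al ka) * (Rad * dl * Rad) +
     Rabs (bb al ka) * ((1 + al * M) ^ 2 / dl) * RInt (Tint al f) 0 Rad.
Proof.
  intros Hn Ha HR Hf HM HNM Hd.
  pose proof (n2_ge1 n Hn) as Hn2.
  set (b := bb al ka).
  assert (Hs : forall r, 0 <= r <= Rad -> f r * f r <= M) by (intros r Hr; apply Rle_trans with (Nf Rad f); [apply sup_bound; auto | exact HNM]).
  pose proof (W_bound al Rad f M dl HR Ha Hf HM Hs Hd) as HW.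
  pose proof (Dform_nonneg Rad 0 0 1 f HR Hf ltac:(lra) ltac:(lra) ltac:(lra)) as HW0.
  pose proof (Dform_nonneg Rad 0 1 0 f HR Hf ltac:(lra) ltac:(lra) ltac:(lra)) as HP0.
  assert (ED : Dform Rad 1 (IZR n ^ 2) b f f = Nf Rad f + (IZR n ^ 2 - 1) * Dform Rad 0 1 0 f f + b * Dform Rad 0 0 1 f f).
  { unfold Nf. rewrite (Dform_coef Rad 1 (IZR n ^ 2) b), (Dform_coef Rad 1 1 0), (Dform_coef Rad 0 1 0), (Dform_coef Rad 0 0 1); auto. ring. }
  pose proof (J_nonneg al Rad f HR Ha Hf).
  unfold Ff. fold b.
  assert (0 <= (IZR n ^ 2 - 1) * Dform Rad 0 1 0 f f) by (apply Rmult_le_pos; lra).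
  assert (- Rabs b * Dform Rad 0 0 1 f f <= b * Dform Rad 0 0 1 f f).
  { apply Rmult_le_compat_r; auto. pose proof (Rabs_pos b). unfold Rabs in *; destruct Rcase_abs; lra. }
  assert (Rabs b * Dform Rad 0 0 1 f f <= Rabs b * (Rad * dl * Rad + (1 + al * M) ^ 2 / dl * RInt (Tint al f) 0 Rad)).
  { apply Rmult_le_compat_l; auto. apply Rabs_pos. }
  lra.
Qed.

Lemma LG_neg n al ka Rad U : (1 <= Z.abs n)%Z -> 0 < al -> 0 < Rad -> inH Rad U -> Hnorm Rad U <> 0 ->
  EF Rad 1 (IZR n ^ 2) (bb al ka) (phiG al) U = 0 -> LF Rad 1 (IZR n ^ 2) (bb al ka) (dphiG al) U U <> 0.
Proof.
  intros Hn Ha HR HU HnU HE HL.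
  pose proof (phiG_OK al Ha) as Hp.
  assert (Hnl : 0 < nl Rad U).
  { rewrite Hnorm_nl in HnU by auto. pose proof (nl_nonneg Rad U HR HU). destruct H as [H|H]; auto.
    rewrite <- H, sqrt_0 in HnU. lra. }
  destruct (inH_bound Rad U HR HU) as [M [HM HMb]].
  set (b := bb al ka) in *.
  set (dl := nl Rad U / (4 * (Rabs b * Rad * Rad + 1))).
  assert (Hb0 : 0 <= Rabs b * Rad * Rad) by (apply Rmult_le_pos; [apply Rmult_le_pos; [apply Rabs_pos|]|]; lra).
  assert (Hdl : 0 < dl) by (unfold dl; apply Rdiv_lt_0_compat; lra).
  set (Cd := Rabs b * ((1 + al * M) ^ 2 / dl)).
  assert (Hpt : forall k, Nf Rad (U k) <= 2 * Ff Rad 1 (IZR n ^ 2) b (phiG al) (U k) + Rabs b * (Rad * dl * Rad) + Cd * RInt (Tint al (U k)) 0 Rad).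
  { intros k. apply pt_ineq; auto. apply inH_C1; auto. }
  assert (HF := F_conv Rad 1 (IZR n ^ 2) b _ _ _ U HR Hp HU). rewrite HE in HF.
  assert (HLc := L_conv Rad 1 (IZR n ^ 2) b _ _ _ U U HR Hp HU HU). rewrite HL in HLc.
  assert (HT : is_lim_seq (fun k => RInt (Tint al (U k)) 0 Rad) 0).
  { apply is_lim_seq_ext with (fun k => / 2 * (2 * Ff Rad 1 (IZR n ^ 2) b (phiG al) (U k) - Lf Rad 1 (IZR n ^ 2) b (dphiG al) (U k) (U k))).
    intros k. pose proof (LG_FG n al ka Rad (U k) HR Ha (inH_C1 Rad U k HU)). fold b in H. lra.
    replace 0 with (/ 2 * (2 * 0 - 0)) by ring.
    apply (is_lim_seq_scal_l _ (/2) (2 * 0 - 0)). apply is_lim_seq_minus'; auto.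
    apply (is_lim_seq_scal_l _ 2 0). auto. }
  assert (HR' : is_lim_seq (fun k => 2 * Ff Rad 1 (IZR n ^ 2) b (phiG al) (U k) + Rabs b * (Rad * dl * Rad) + Cd * RInt (Tint al (U k)) 0 Rad)
     (2 * 0 + Rabs b * (Rad * dl * Rad) + Cd * 0)).
  { apply is_lim_seq_plus'. apply is_lim_seq_plus'. apply (is_lim_seq_scal_l _ 2 0). auto. apply is_lim_seq_const.
    apply (is_lim_seq_scal_l _ Cd 0). auto. }
  pose proof (is_lim_seq_le _ _ _ _ Hpt (N_conv Rad U HR HU) HR') as Hle. simpl in Hle.
  assert (Rabs b * (Rad * dl * Rad) = (Rabs b * Rad * Rad) * nl Rad U / (4 * (Rabs b * Rad * Rad + 1))) by (unfold dl; field; lra).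
  assert ((Rabs b * Rad * Rad) * nl Rad U / (4 * (Rabs b * Rad * Rad + 1)) <= nl Rad U / 4).
  { apply Rmult_le_reg_r with (4 * (Rabs b * Rad * Rad + 1)). lra.
    replace (Rabs b * Rad * Rad * nl Rad U / (4 * (Rabs b * Rad * Rad + 1)) * (4 * (Rabs b * Rad * Rad + 1))) with (Rabs b * Rad * Rad * nl Rad U) by (field; lra).
    replace (nl Rad U / 4 * (4 * (Rabs b * Rad * Rad + 1))) with ((Rabs b * Rad * Rad + 1) * nl Rad U) by (field; lra). nra. }
  lra.
Qed.

Theorem lemma4p1 (n : Z) (alpha Rad kappa : R)
  (hn : (1 <= Z.abs n)%Z) (ha : 0 < alpha) (hR : 0 < Rad)
  (U : Hseq) (hU : inH Rad U) :
  nontrivial_crit n alpha kappa Rad U <->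
  (inM n alpha kappa Rad U /\ crit_on_M n alpha kappa Rad U).
Proof.
  set (a2 := IZR n ^ 2). set (b := bb alpha kappa).
  assert (EI : forall X, inH Rad X -> EF Rad 1 a2 b (phiI alpha) X = IE n alpha kappa Rad X).
  { intros X HX. unfold IE, EF, seqlim. f_equal. apply Lim_seq_ext. intros k.
    symmetry. apply Ifun_Ff; auto. apply inH_C1; auto. }
  assert (EG : forall X, inH Rad X -> EF Rad 1 a2 b (phiG alpha) X = GE n alpha kappa Rad X).
  { intros X HX. unfold GE, EF, seqlim. f_equal. apply Lim_seq_ext. intros k.
    symmetry. apply gfun_Ff; auto. apply inH_C1; auto. }
  assert (FI : is_Fderiv Rad (IE n alpha kappa Rad) U (LF Rad 1 a2 b (dphiI alpha) U)).
  { eapply Fderiv_ext; eauto. apply Fderiv_EF with (phi := phiI alpha) (K := 2 / alpha); auto. apply phiI_OK; auto. }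
  assert (FG : is_Fderiv Rad (GE n alpha kappa Rad) U (LF Rad 1 a2 b (dphiG alpha) U)).
  { eapply Fderiv_ext; eauto. apply Fderiv_EF with (phi := phiG alpha) (K := 6 / alpha); auto. apply phiG_OK; auto. }
  assert (KEY : LF Rad 1 a2 b (dphiI alpha) U U = 2 * GE n alpha kappa Rad U).
  { rewrite <- EG by auto. unfold LF at 1. apply seqlim_eq.
    apply is_lim_seq_ext with (fun k => 2 * Ff Rad 1 a2 b (phiG alpha) (U k)).
    intros k. symmetry. apply LI_FG; auto. apply inH_C1; auto.
    apply (is_lim_seq_scal_l _ 2 (EF Rad 1 a2 b (phiG alpha) U)).
    apply (F_conv Rad 1 a2 b _ (dphiG alpha) (6 / alpha)); auto. apply phiG_OK; auto. }
  split.
  - intros [Hn [L [HL HL0]]].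
    assert (LU : L U = LF Rad 1 a2 b (dphiI alpha) U U) by (eapply Fderiv_unique; eauto).
    rewrite HL0 in LU by auto. rewrite KEY in LU.
    assert (G0 : GE n alpha kappa Rad U = 0) by lra.
    assert (HM : inM n alpha kappa Rad U) by (split; auto).
    split; auto. split; auto.
    exists 0, L, (LF Rad 1 a2 b (dphiG alpha) U). split; auto. split; auto.
    intros H HH. rewrite HL0 by auto. ring.
  - intros [_ [HM [xi [L1 [L2 [H1 [H2 H3]]]]]]].
    destruct HM as [Hn HG0].
    split; auto. exists L1. split; auto.
    assert (L1U : L1 U = LF Rad 1 a2 b (dphiI alpha) U U) by (eapply Fderiv_unique; eauto).
    assert (L2U : L2 U = LF Rad 1 a2 b (dphiG alpha) U U) by (eapply Fderiv_unique; eauto).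
    rewrite KEY, HG0 in L1U. rewrite H3 in L1U by auto.
    assert (NZ : LF Rad 1 a2 b (dphiG alpha) U U <> 0).
    { apply LG_neg with (n := n) (al := alpha) (ka := kappa); auto. rewrite EG; auto. }
    rewrite L2U in L1U.
    assert (xi = 0).
    { destruct (Rmult_integral _ _ (eq_trans L1U (Rmult_0_r 2))) as [E|E]; auto. contradiction. }
    intros H0 HH. rewrite H3 by auto. subst xi. ring.
Qed.
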